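(* Let $\Phi=(\phi_1,\dots,\phi_6)$ be an admissible datum, let $\Phi^a=\sum_{j=1}^6(-1)^j\phi_j$, let $\psi_a$ be the solution of $\Delta\psi_a=0$ in $D$, $\psi_a=\Phi^a$ on $\partial D$, and let $p\in D$. Then the conditions \[\int_{\partial D}\Phi^a\Big(\frac{\zeta+p}{\overline p\,\zeta+1}\Big)ds_\zeta=0,\quad \int_{\partial D}\Phi^a\Big(\frac{\zeta+p}{\overline p\,\zeta+1}\Big)\zeta_r\,ds_\zeta=0\ (r=1,2),\] \[\int_{\partial D}\Phi^a\Big(\frac{\zeta+p}{\overline p\,\zeta+1}\Big)\zeta_1^2\,ds_\zeta=0,\quad \int_{\partial D}\Phi^a\Big(\frac{\zeta+p}{\overline p\,\zeta+1}\Big)\zeta_1\zeta_2\,ds_\zeta=0\] (with $\zeta=(\zeta_1,\zeta_2)$) hold if and only if $\psi_a(p)=0$, $\nabla\psi_a(p)=(0,0)$ and $H\psi_a(p)=0$, where $H\psi_a=(\partial^2_{x_ix_j}\psi_a)_{i,j=1,2}$ is the Hessian matrix of $\psi_a$.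
   Context: Let $D=\{x\in\mathbb{R}^2:|x|<1\}$ be the open unit disk; points $(x_1,x_2)\in\mathbb{R}^2$ are identified with complex numbers $x_1+ix_2$, $\overline p$ is complex conjugation, and $ds_\zeta$ is arc length on $\partial D$. A $6$-tuple $\Phi=(\phi_1,\dots,\phi_6)$ is an admissible datum if $\phi_i\in W^{1,\infty}(\partial D)$, $\phi_i\ge 0$, $\phi_i\phi_j=0$ a.e. on $\partial D$ for $i\ne j$, each set $\{\phi_i>0\}\subset\partial D$ is a nonempty open connected arc, and $\sum_{i=1}^6\phi_i$ vanishes at exactly $6$ points of $\partial D$ (the endpoints of these arcs). *)

(* Defs.v *)
(* Stdlib reals + Coquelicot.  Points of R^2 are Coquelicot complex
   numbers C = R * R; (x1,x2) <-> x1 + i x2. *)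
From Stdlib Require Import Reals Lra ZArith.
From Coquelicot Require Export Coquelicot.
Open Scope R_scope.

Definition on_circle (x : C) : Prop := Cmod x = 1.
Definition in_disk (x : C) : Prop := Cmod x < 1.

Definition circ (t : R) : C := (cos t, sin t).

Definition bint (f : C -> R) : R := RInt (fun t => f (circ t)) 0 (2 * PI).

(* W^{1,oo}(dD) = Lipschitz functions on the circle *)
Definition W1inf_circle (f : C -> R) : Prop :=
  exists L : R, forall x y, on_circle x -> on_circle y ->
    Rabs (f x - f y) <= L * Cmod (x - y).

(* {f > 0} (as a subset of dD) is a nonempty open connected arc:
   the image of an open angular interval (a,b) with 0 < b - a <= 2 PI *)
Definition positivity_set_is_arc (f : C -> R) : Prop :=
  exists a b : R, a < b /\ b <= a + 2 * PI /\
    forall t : R, 0 < f (circ t) <->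
      exists k : Z, a < t + 2 * PI * IZR k < b.

Definition Phi_sum (phi : nat -> C -> R) (x : C) : R :=
  sum_f_R0 (fun k => phi (S k) x) 5.

Definition Phi_a (phi : nat -> C -> R) (x : C) : R :=
  sum_f_R0 (fun k => (-1) ^ (S k) * phi (S k) x) 5.

Definition admissible (phi : nat -> C -> R) : Prop :=
  (forall i, (1 <= i <= 6)%nat -> W1inf_circle (phi i)) /\
  (forall i, (1 <= i <= 6)%nat -> forall x, on_circle x -> 0 <= phi i x) /\
  (forall i j, (1 <= i <= 6)%nat -> (1 <= j <= 6)%nat -> i <> j ->
     forall x, on_circle x -> phi i x * phi j x = 0) /\
  (forall i, (1 <= i <= 6)%nat -> positivity_set_is_arc (phi i)) /\
  (exists l : list C, length l = 6%nat /\ List.NoDup l /\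
     forall x, on_circle x -> (Phi_sum phi x = 0 <-> List.In x l)).

Definition pd1 (f : C -> R) (x : C) : R := Derive (fun s => f (s, snd x)) (fst x).
Definition pd2 (f : C -> R) (x : C) : R := Derive (fun s => f (fst x, s)) (snd x).

Definition ex_d1 (f : C -> R) (x : C) : Prop := ex_derive (fun s => f (s, snd x)) (fst x).
Definition ex_d2 (f : C -> R) (x : C) : Prop := ex_derive (fun s => f (fst x, s)) (snd x).

Definition cont_within (A : C -> Prop) (g : C -> R) (x : C) : Prop :=
  forall eps : R, 0 < eps -> exists delta : R, 0 < delta /\
    forall y, A y -> Cmod (y - x) < delta -> Rabs (g y - g x) < eps.

Definition C2_disk (f : C -> R) : Prop :=
  forall x, in_disk x ->
    ex_d1 f x /\ ex_d2 f x /\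
    ex_d1 (pd1 f) x /\ ex_d2 (pd1 f) x /\ ex_d1 (pd2 f) x /\ ex_d2 (pd2 f) x /\
    cont_within in_disk f x /\
    cont_within in_disk (pd1 f) x /\ cont_within in_disk (pd2 f) x /\
    cont_within in_disk (pd1 (pd1 f)) x /\ cont_within in_disk (pd2 (pd1 f)) x /\
    cont_within in_disk (pd1 (pd2 f)) x /\ cont_within in_disk (pd2 (pd2 f)) x.

Definition dirichlet_solution (g psi : C -> R) : Prop :=
  C2_disk psi /\
  (forall x, in_disk x -> pd1 (pd1 psi) x + pd2 (pd2 psi) x = 0) /\
  (forall x, Cmod x <= 1 -> cont_within (fun y => Cmod y <= 1) psi x) /\
  (forall x, on_circle x -> psi x = g x).

Definition moeb (p zeta : C) : C := (zeta + p) / (Cconj p * zeta + 1).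

(* Main.v *)
Require Import Defs.
From Stdlib Require Import Reals Lra Psatz ClassicalEpsilon Classical.
From Coquelicot Require Import Coquelicot.
Open Scope R_scope.

Lemma locally_R (x : R) (P : R -> Prop) :
  (exists d, 0 < d /\ forall y, Rabs (y - x) < d -> P y) -> locally x P.
Proof.
  intros [d [Hd H]]. exists (mkposreal d Hd). intros y Hy. apply H. exact Hy.
Qed.

Lemma locally_R_inv (x : R) (P : R -> Prop) :
  locally x P -> exists d, 0 < d /\ forall y, Rabs (y - x) < d -> P y.
Proof.
  intros [d H]. exists d. split. apply cond_pos. intros y Hy. apply H. exact Hy.
Qed.

Lemma cont_pt_of_2d (f : R -> R -> R) x y : continuity_2d_pt f x y -> continuity_pt (f x) y.
Proof.
  intros H eps Heps. destruct (H (mkposreal eps Heps)) as [d Hd].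
  exists d. split. apply cond_pos. intros z [_ Hz]. unfold R_dist in *.
  apply (Hd x z). rewrite Rminus_eq_0, Rabs_R0. apply cond_pos. exact Hz.
Qed.

Lemma continuous_of_2d (f : R -> R -> R) x y : continuity_2d_pt f x y -> continuous (f x) y.
Proof. intros H. apply continuity_pt_filterlim. apply cont_pt_of_2d. exact H. Qed.

Lemma cont2_const1 (w : R -> R) x y : continuity_pt w y -> continuity_2d_pt (fun _ v => w v) x y.
Proof. intros H. apply (continuity_1d_2d_pt_comp w (fun _ v => v)). exact H. apply continuity_2d_pt_id2. Qed.

Definition Qd a b x y := (1 + a*x + b*y)^2 + (a*y - b*x)^2.
Definition M1 a b x y := ((x+a)*(1+a*x+b*y) + (y+b)*(a*y-b*x)) / Qd a b x y.
Definition M2 a b x y := ((y+b)*(1+a*x+b*y) - (x+a)*(a*y-b*x)) / Qd a b x y.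
Definition kk a b := 1 - a^2 - b^2.
Definition M1x a b x y := kk a b * ((1+a*x+b*y)^2 - (a*y-b*x)^2) / (Qd a b x y)^2.
Definition M1y a b x y := kk a b * (2*(1+a*x+b*y)*(a*y-b*x)) / (Qd a b x y)^2.
Definition M1xx a b x y := -2 * kk a b * (a*((1+a*x+b*y)^3 - 3*(1+a*x+b*y)*(a*y-b*x)^2) + b*((a*y-b*x)^3 - 3*(1+a*x+b*y)^2*(a*y-b*x))) / (Qd a b x y)^3.
Definition M1xy a b x y := 2 * kk a b * (a*((a*y-b*x)^3 - 3*(1+a*x+b*y)^2*(a*y-b*x)) - b*((1+a*x+b*y)^3 - 3*(1+a*x+b*y)*(a*y-b*x)^2)) / (Qd a b x y)^3.

Lemma Qd_pos a b x y : a^2 + b^2 < 1 -> x^2 + y^2 <= 1 -> 0 < Qd a b x y.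
Proof.
  intros Hp Hz. unfold Qd.
  assert (HC : (a*x+b*y)^2 + (a*y-b*x)^2 = (a^2+b^2)*(x^2+y^2)) by ring.
  assert (H1 : (a^2+b^2)*(x^2+y^2) < 1).
  { assert (0 <= a^2+b^2) by (apply Rplus_le_le_0_compat; apply pow2_ge_0). assert (0 <= x^2+y^2) by (apply Rplus_le_le_0_compat; apply pow2_ge_0). nra. }
  assert (0 <= (a*y-b*x)^2) by apply pow2_ge_0.
  assert (H2 : (a*x+b*y)^2 < 1) by lra.
  assert (H3 : 0 < 1 + a*x + b*y).
  { destruct (Rle_or_lt (1 + a*x + b*y) 0) as [Hn|Hn]; [|exact Hn].
    exfalso. assert (1 <= (a*x+b*y)^2). { replace ((a*x+b*y)^2) with ((-(a*x+b*y))*(-(a*x+b*y))) by ring.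
    replace 1 with (1*1) by ring. apply Rmult_le_compat; lra. } lra. }
  assert (0 < (1 + a*x + b*y)^2) by (apply pow_lt; lra). lra.
Qed.

Lemma moeb_eq a b x y : 0 < Qd a b x y -> moeb (a,b) (x,y) = (M1 a b x y, M2 a b x y).
Proof.
  intros H. unfold Qd in H. unfold moeb, M1, M2, Qd, Cdiv, Cinv, Cmult, Cconj, Cplus. simpl.
  f_equal; field; nra.
Qed.

Lemma M_norm a b x y : 0 < Qd a b x y ->
  (M1 a b x y)^2 + (M2 a b x y)^2 = 1 - kk a b * (1 - x^2 - y^2) / Qd a b x y.
Proof. intros H. unfold Qd in *. unfold M1, M2, kk, Qd. field. nra. Qed.

Lemma kk_pos a b : a^2 + b^2 < 1 -> 0 < kk a b.
Proof. unfold kk. lra. Qed.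

Lemma Cmod_pair x y : Cmod (x,y) = sqrt (x^2+y^2).
Proof. reflexivity. Qed.

Lemma M_in_disk a b x y : a^2 + b^2 < 1 -> x^2 + y^2 < 1 -> in_disk (M1 a b x y, M2 a b x y).
Proof.
  intros Hp Hz. unfold in_disk. rewrite Cmod_pair.
  assert (HQ : 0 < Qd a b x y) by (apply Qd_pos; lra).
  pose proof (M_norm a b x y HQ) as HN.
  assert (0 < kk a b) by (apply kk_pos; lra).
  assert (0 < kk a b * (1 - x^2 - y^2) / Qd a b x y).
  { unfold Rdiv. apply Rmult_lt_0_compat. apply Rmult_lt_0_compat; lra. apply Rinv_0_lt_compat; lra. }
  assert (0 <= M1 a b x y ^2) by apply pow2_ge_0.
  assert (0 <= M2 a b x y ^2) by apply pow2_ge_0.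
  rewrite <- sqrt_1. apply sqrt_lt_1_alt. lra.
Qed.

Lemma M_in_cdisk a b x y : a^2 + b^2 < 1 -> x^2 + y^2 <= 1 -> Cmod (M1 a b x y, M2 a b x y) <= 1.
Proof.
  intros Hp Hz. rewrite Cmod_pair.
  assert (HQ : 0 < Qd a b x y) by (apply Qd_pos; lra).
  pose proof (M_norm a b x y HQ) as HN.
  assert (0 < kk a b) by (apply kk_pos; lra).
  assert (0 <= kk a b * (1 - x^2 - y^2) / Qd a b x y).
  { unfold Rdiv. apply Rmult_le_pos. apply Rmult_le_pos; lra. left; apply Rinv_0_lt_compat; lra. }
  rewrite <- sqrt_1. apply sqrt_le_1_alt. lra.
Qed.

Lemma M_on_circle a b x y : a^2 + b^2 < 1 -> x^2 + y^2 = 1 -> on_circle (M1 a b x y, M2 a b x y).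
Proof.
  intros Hp Hz. unfold on_circle. rewrite Cmod_pair.
  assert (HQ : 0 < Qd a b x y) by (apply Qd_pos; lra).
  rewrite (M_norm a b x y HQ).
  replace (1 - x^2 - y^2) with 0 by lra. rewrite Rmult_0_r. unfold Rdiv. rewrite Rmult_0_l, Rminus_0_r. apply sqrt_1.
Qed.

Lemma M1_0 a b : M1 a b 0 0 = a.
Proof. unfold M1, Qd. field. Qed.
Lemma M2_0 a b : M2 a b 0 0 = b.
Proof. unfold M2, Qd. field. Qed.
Lemma M1x_0 a b : M1x a b 0 0 = kk a b.
Proof. unfold M1x, Qd. field. Qed.
Lemma M1y_0 a b : M1y a b 0 0 = 0.
Proof. unfold M1y, Qd. field. Qed.

Definition g1 a b r t := M1 a b (r * cos t) (r * sin t).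
Definition g2 a b r t := M2 a b (r * cos t) (r * sin t).
Definition g1r a b r t := cos t * M1x a b (r * cos t) (r * sin t) + sin t * M1y a b (r * cos t) (r * sin t).
Definition g2r a b r t := cos t * (- M1y a b (r * cos t) (r * sin t)) + sin t * M1x a b (r * cos t) (r * sin t).
Definition g1t a b r t := - r * sin t * M1x a b (r * cos t) (r * sin t) + r * cos t * M1y a b (r * cos t) (r * sin t).
Definition g2t a b r t := - r * sin t * (- M1y a b (r * cos t) (r * sin t)) + r * cos t * M1x a b (r * cos t) (r * sin t).
Definition g1rr a b r t := cos t ^2 * M1xx a b (r * cos t) (r*sin t) + 2 * cos t * sin t * M1xy a b (r * cos t) (r*sin t) - sin t ^ 2 * M1xx a b (r * cos t) (r*sin t).
Definition g2rr a b r t := cos t ^2 * (- M1xy a b (r * cos t) (r*sin t)) + 2 * cos t * sin t * M1xx a b (r * cos t) (r*sin t) + sin t ^ 2 * M1xy a b (r * cos t) (r*sin t).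
Definition g1tt a b r t := r^2 * sin t ^2 * M1xx a b (r * cos t) (r*sin t) - 2 * r^2 * cos t * sin t * M1xy a b (r * cos t) (r*sin t) - r^2 * cos t ^2 * M1xx a b (r * cos t) (r*sin t) - r * cos t * M1x a b (r * cos t) (r*sin t) - r * sin t * M1y a b (r * cos t) (r*sin t).
Definition g2tt a b r t := - r^2 * sin t ^2 * M1xy a b (r * cos t) (r*sin t) - 2 * r^2 * cos t * sin t * M1xx a b (r * cos t) (r*sin t) + r^2 * cos t ^2 * M1xy a b (r * cos t) (r*sin t) + r * cos t * M1y a b (r * cos t) (r*sin t) - r * sin t * M1x a b (r * cos t) (r*sin t).

Lemma g1t_eq a b r t : g1t a b r t = - r * g2r a b r t.
Proof. unfold g1t, g2r. ring. Qed.
Lemma g2t_eq a b r t : g2t a b r t = r * g1r a b r t.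
Proof. unfold g2t, g1r. ring. Qed.
Lemma g1tt_eq a b r t : g1tt a b r t = - r^2 * g1rr a b r t - r * g1r a b r t.
Proof. unfold g1tt, g1rr, g1r. ring. Qed.
Lemma g2tt_eq a b r t : g2tt a b r t = - r^2 * g2rr a b r t - r * g2r a b r t.
Proof. unfold g2tt, g2rr, g2r. ring. Qed.

Ltac nzQ := match goal with H : 0 < Qd _ _ _ _ |- _ => unfold Qd in H; apply Rgt_not_eq; repeat apply Rmult_lt_0_compat; simpl in *; lra end.
Ltac finQ := match goal with H : 0 < Qd _ _ _ _ |- _ => unfold Qd in *; field; apply Rgt_not_eq; exact H end.
Ltac gder := intros H; unfold g1, g2, g1r, g2r, g1t, g2t, g1rr, g2rr, g1tt, g2tt, M1, M2, M1x, M1y, M1xx, M1xy, kk; unfold Qd; auto_derive; [ try (repeat split; nzQ) | finQ ].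

Lemma d_g1_r a b r t : 0 < Qd a b (r * cos t) (r * sin t) -> is_derive (fun r => g1 a b r t) r (g1r a b r t).
Proof. gder. Qed.
Lemma d_g2_r a b r t : 0 < Qd a b (r * cos t) (r * sin t) -> is_derive (fun r => g2 a b r t) r (g2r a b r t).
Proof. gder. Qed.
Lemma d_g1r_r a b r t : 0 < Qd a b (r * cos t) (r * sin t) -> is_derive (fun r => g1r a b r t) r (g1rr a b r t).
Proof. gder. Qed.
Lemma d_g2r_r a b r t : 0 < Qd a b (r * cos t) (r * sin t) -> is_derive (fun r => g2r a b r t) r (g2rr a b r t).
Proof. gder. Qed.
Lemma d_g1_t a b r t : 0 < Qd a b (r * cos t) (r * sin t) -> is_derive (fun t => g1 a b r t) t (g1t a b r t).
Proof. gder. Qed.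
Lemma d_g2_t a b r t : 0 < Qd a b (r * cos t) (r * sin t) -> is_derive (fun t => g2 a b r t) t (g2t a b r t).
Proof. gder. Qed.
Lemma d_g1t_t a b r t : 0 < Qd a b (r * cos t) (r * sin t) -> is_derive (fun t => g1t a b r t) t (g1tt a b r t).
Proof. gder. Qed.
Lemma d_g2t_t a b r t : 0 < Qd a b (r * cos t) (r * sin t) -> is_derive (fun t => g2t a b r t) t (g2tt a b r t).
Proof. gder. Qed.

Lemma cont2_pow (f : R -> R -> R) n x y : continuity_2d_pt f x y -> continuity_2d_pt (fun u v => f u v ^ n) x y.
Proof.
  intros H. induction n as [|n IH]; simpl.
  - apply continuity_2d_pt_const.
  - apply (continuity_2d_pt_mult f (fun u v => f u v ^ n)); assumption.
Qed.
Lemma cont2_cos (f : R -> R -> R) x y : continuity_2d_pt f x y -> continuity_2d_pt (fun u v => cos (f u v)) x y.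
Proof. intros H. apply (continuity_1d_2d_pt_comp cos f). apply continuity_cos. exact H. Qed.
Lemma cont2_sin (f : R -> R -> R) x y : continuity_2d_pt f x y -> continuity_2d_pt (fun u v => sin (f u v)) x y.
Proof. intros H. apply (continuity_1d_2d_pt_comp sin f). apply continuity_sin. exact H. Qed.

Ltac c2d :=
  lazymatch goal with
  | |- continuity_2d_pt (fun u v => @?f u v + @?g u v) _ _ => apply (continuity_2d_pt_plus f g); c2d
  | |- continuity_2d_pt (fun u v => @?f u v - @?g u v) _ _ => apply (continuity_2d_pt_minus f g); c2d
  | |- continuity_2d_pt (fun u v => @?f u v * @?g u v) _ _ => apply (continuity_2d_pt_mult f g); c2d
  | |- continuity_2d_pt (fun u v => - @?f u v) _ _ => apply (continuity_2d_pt_opp f); c2d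
  | |- continuity_2d_pt (fun u v => / @?f u v) _ _ => apply (continuity_2d_pt_inv f); [c2d | idtac]
  | |- continuity_2d_pt (fun u v => @?f u v ^ _) _ _ => apply (cont2_pow f); c2d
  | |- continuity_2d_pt (fun u v => cos (@?f u v)) _ _ => apply (cont2_cos f); c2d
  | |- continuity_2d_pt (fun u v => sin (@?f u v)) _ _ => apply (cont2_sin f); c2d
  | |- continuity_2d_pt (fun u v => u) _ _ => apply continuity_2d_pt_id1
  | |- continuity_2d_pt (fun u v => v) _ _ => apply continuity_2d_pt_id2
  | |- continuity_2d_pt (fun u v => Qd ?a ?b (@?X u v) (@?Y u v)) _ _ => unfold Qd; c2d
  | |- continuity_2d_pt (fun u v => _) _ _ => apply continuity_2d_pt_const
  end.

Ltac nzpow := match goal with H : 0 < Qd _ _ _ _ |- _ => apply pow_nonzero; apply Rgt_not_eq; exact H end.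
Ltac gcont := intros H; unfold g1, g2, g1r, g2r, g1t, g2t, g1rr, g2rr, g1tt, g2tt, M1, M2, M1x, M1y, M1xx, M1xy; unfold Rdiv; c2d; try nzpow; try (apply Rgt_not_eq; exact H).

Lemma c_g1 a b r t : 0 < Qd a b (r * cos t) (r * sin t) -> continuity_2d_pt (g1 a b) r t.
Proof. gcont. Qed.
Lemma c_g2 a b r t : 0 < Qd a b (r * cos t) (r * sin t) -> continuity_2d_pt (g2 a b) r t.
Proof. gcont. Qed.
Lemma c_g1r a b r t : 0 < Qd a b (r * cos t) (r * sin t) -> continuity_2d_pt (g1r a b) r t.
Proof. gcont. Qed.
Lemma c_g2r a b r t : 0 < Qd a b (r * cos t) (r * sin t) -> continuity_2d_pt (g2r a b) r t.
Proof. gcont. Qed.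
Lemma c_g1rr a b r t : 0 < Qd a b (r * cos t) (r * sin t) -> continuity_2d_pt (g1rr a b) r t.
Proof. gcont. Qed.
Lemma c_g2rr a b r t : 0 < Qd a b (r * cos t) (r * sin t) -> continuity_2d_pt (g2rr a b) r t.
Proof. gcont. Qed.
Lemma c_g1t a b r t : 0 < Qd a b (r * cos t) (r * sin t) -> continuity_2d_pt (g1t a b) r t.
Proof. gcont. Qed.
Lemma c_g2t a b r t : 0 < Qd a b (r * cos t) (r * sin t) -> continuity_2d_pt (g2t a b) r t.
Proof. gcont. Qed.
Lemma c_g1tt a b r t : 0 < Qd a b (r * cos t) (r * sin t) -> continuity_2d_pt (g1tt a b) r t.
Proof. gcont. Qed.
Lemma c_g2tt a b r t : 0 < Qd a b (r * cos t) (r * sin t) -> continuity_2d_pt (g2tt a b) r t.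
Proof. gcont. Qed.

Lemma Cmod_le_sum x y : Cmod (x,y) <= Rabs x + Rabs y.
Proof.
  rewrite Cmod_pair. rewrite <- (sqrt_pow2 (Rabs x + Rabs y)).
  2: { pose proof (Rabs_pos x). pose proof (Rabs_pos y). lra. }
  apply sqrt_le_1_alt.
  pose proof (Rabs_pos x). pose proof (Rabs_pos y).
  rewrite <- (pow2_abs x), <- (pow2_abs y).
  assert (0 <= Rabs x * Rabs y) by (apply Rmult_le_pos; lra). nra.
Qed.

Lemma Cminus_pair x1 y1 x2 y2 : ((x1,y1) - (x2,y2))%C = (x1 - x2, y1 - y2).
Proof. unfold Cminus, Cplus, Copp. simpl. reflexivity. Qed.

Lemma Cmod_shift s w x y : Cmod (s,w) <= Cmod (x,y) + Rabs (s - x) + Rabs (w - y).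
Proof.
  replace (s,w) with ((x,y) + ((s - x)%R, (w - y)%R))%C.
  2: { unfold Cplus. simpl. f_equal; ring. }
  eapply Rle_trans. apply Cmod_triangle. pose proof (Cmod_le_sum (s-x) (w-y)). lra.
Qed.

Definition jcont (S : R -> Prop) (f : R -> R -> R) r t := forall eps, 0 < eps -> exists d, 0 < d /\
  forall u v, S u -> Rabs (u - r) < d -> Rabs (v - t) < d -> Rabs (f u v - f r t) < eps.

Lemma jcont_of_2d S f r t : continuity_2d_pt f r t -> jcont S f r t.
Proof.
  intros H eps Heps. destruct (H (mkposreal eps Heps)) as [d Hd].
  exists d. split. apply cond_pos. intros u v _ Hu Hv. apply Hd; assumption.
Qed.

Lemma jcont_to_2d f r t lo hi : lo < r < hi -> jcont (fun u => lo < u < hi) f r t -> continuity_2d_pt f r t.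
Proof.
  intros Hr H eps. destruct (H eps (cond_pos eps)) as [d [Hd P]].
  assert (0 < Rmin d (Rmin (r - lo) (hi - r))) by (repeat apply Rmin_pos; lra).
  exists (mkposreal _ H0). simpl. intros u v Hu Hv.
  pose proof (Rmin_l d (Rmin (r - lo) (hi - r))). pose proof (Rmin_r d (Rmin (r - lo) (hi - r))).
  pose proof (Rmin_l (r - lo) (hi - r)). pose proof (Rmin_r (r - lo) (hi - r)).
  apply Rabs_def2 in Hu.
  apply P. lra. apply Rabs_def1; lra. lra.
Qed.

Lemma jcont_mult S f g r t : jcont S f r t -> jcont S g r t -> jcont S (fun u v => f u v * g u v) r t.
Proof.
  intros Hf Hg eps Heps.
  set (A := Rabs (f r t)). set (B := Rabs (g r t)).
  set (e1 := Rmin 1 (eps / (2 * (B + 1)))).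
  set (e2 := eps / (2 * (A + 2))).
  assert (HA : 0 <= A) by apply Rabs_pos. assert (HB : 0 <= B) by apply Rabs_pos.
  assert (He1 : 0 < e1). { apply Rmin_pos. lra. apply Rdiv_lt_0_compat; lra. }
  assert (He2 : 0 < e2) by (apply Rdiv_lt_0_compat; lra).
  destruct (Hf e1 He1) as [d1 [Hd1 P1]]. destruct (Hg e2 He2) as [d2 [Hd2 P2]].
  exists (Rmin d1 d2). split. apply Rmin_pos; lra.
  intros u v Hs Hu Hv.
  pose proof (Rmin_l d1 d2). pose proof (Rmin_r d1 d2).
  specialize (P1 u v Hs ltac:(lra) ltac:(lra)). specialize (P2 u v Hs ltac:(lra) ltac:(lra)).
  replace (f u v * g u v - f r t * g r t) with ((f u v - f r t) * g u v + f r t * (g u v - g r t)) by ring.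
  eapply Rle_lt_trans. apply Rabs_triang. rewrite !Rabs_mult.
  assert (Hg1 : Rabs (g u v) <= B + e2).
  { replace (g u v) with (g r t + (g u v - g r t)) by ring. eapply Rle_trans. apply Rabs_triang. fold B. lra. }
  assert (He1' : e1 <= eps / (2 * (B + 1))) by apply Rmin_r.
  assert (He1'' : e1 <= 1) by apply Rmin_l.
  assert (Hx1 : Rabs (f u v - f r t) * Rabs (g u v) <= e1 * (B + e2)).
  { apply Rmult_le_compat; try apply Rabs_pos; lra. }
  assert (Hx2 : A * Rabs (g u v - g r t) <= A * e2) by (apply Rmult_le_compat_l; lra).
  fold A.
  assert (e2 * (A + 2) = eps / 2) by (unfold e2; field; lra).
  assert (e1 * (B + 1) <= eps / 2).
  { apply (Rmult_le_compat_r (B + 1)) in He1'. replace (eps / (2 * (B + 1)) * (B + 1)) with (eps/2) in He1' by (field; lra). exact He1'. lra. }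
  assert (e1 * e2 <= e2) by nra.
  assert (e1 * B + e1 * e2 + A * e2 < eps) by nra.
  nra.
Qed.

Lemma comp_jcont (H : C -> R) (A : C -> Prop) (S : R -> Prop) f1 f2 r t :
  cont_within A H (f1 r t, f2 r t) -> continuity_2d_pt f1 r t -> continuity_2d_pt f2 r t ->
  (forall u v, S u -> A (f1 u v, f2 u v)) ->
  jcont S (fun u v => H (f1 u v, f2 u v)) r t.
Proof.
  intros HH C1 C2 HA eps Heps.
  destruct (HH eps Heps) as [d [Hd P]].
  destruct (C1 (mkposreal (d/2) ltac:(lra))) as [d1 P1].
  destruct (C2 (mkposreal (d/2) ltac:(lra))) as [d2 P2].
  exists (Rmin d1 d2). split. apply Rmin_pos; apply cond_pos.
  intros u v Hs Hu Hv.
  pose proof (Rmin_l d1 d2). pose proof (Rmin_r d1 d2).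
  apply P. apply HA; exact Hs.
  rewrite Cminus_pair. eapply Rle_lt_trans. apply Cmod_le_sum.
  specialize (P1 u v ltac:(lra) ltac:(lra)). specialize (P2 u v ltac:(lra) ltac:(lra)). simpl in P1, P2. lra.
Qed.

Lemma MVT_abs (f df : R -> R) x u :
  (forall s, Rmin x u <= s <= Rmax x u -> is_derive f s (df s)) ->
  exists c, Rabs (c - x) <= Rabs (u - x) /\ f u - f x = df c * (u - x).
Proof.
  intros Hd. destruct (MVT_gen f x u df) as [c [Hc E]].
  - intros s Hs. apply Hd. lra.
  - intros s Hs. apply derivable_continuous_pt. exists (df s). apply is_derive_Reals. apply Hd. exact Hs.
  - exists c. split; [|exact E].
    unfold Rmin, Rmax in Hc. destruct (Rle_dec x u); unfold Rabs; repeat destruct Rcase_abs; lra.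
Qed.

Lemma C1_diff (H : C -> R) x y :
  (forall z, in_disk z -> ex_d1 H z /\ ex_d2 H z) ->
  cont_within in_disk (pd1 H) (x,y) -> cont_within in_disk (pd2 H) (x,y) -> in_disk (x,y) ->
  differentiable_pt_lim (fun u v => H (u,v)) x y (pd1 H (x,y)) (pd2 H (x,y)).
Proof.
  intros Hex H1 H2 Hin eps.
  pose proof (cond_pos eps) as He.
  destruct (H1 (eps/2) ltac:(lra)) as [d1 [Hd1 P1]].
  destruct (H2 (eps/2) ltac:(lra)) as [d2 [Hd2 P2]].
  unfold in_disk in Hin.
  set (d0 := (1 - Cmod (x,y)) / 2).
  assert (Hd0 : 0 < d0) by (unfold d0; lra).
  assert (Hd : 0 < Rmin d0 (Rmin (d1/2) (d2/2))) by (repeat apply Rmin_pos; lra).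
  exists (mkposreal _ Hd). simpl. intros u v Hu Hv.
  pose proof (Rmin_l d0 (Rmin (d1/2) (d2/2))). pose proof (Rmin_r d0 (Rmin (d1/2) (d2/2))).
  pose proof (Rmin_l (d1/2) (d2/2)). pose proof (Rmin_r (d1/2) (d2/2)).
  assert (Hbox : forall s w, Rabs (s - x) <= Rabs (u - x) -> Rabs (w - y) <= Rabs (v - y) ->
     in_disk (s,w) /\ Cmod ((s,w) - (x,y)) < Rmin d1 d2).
  { intros s w Hs Hw. split.
    - unfold in_disk. pose proof (Cmod_shift s w x y). unfold d0 in *. lra.
    - rewrite Cminus_pair. eapply Rle_lt_trans. apply Cmod_le_sum.
      apply Rmin_glb_lt; lra. }
  destruct (MVT_abs (fun s => H (s,v)) (fun s => pd1 H (s,v)) x u) as [c [Hc Ec]].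
  { intros s Hs. apply (Derive_correct (fun s0 => H (s0, v))).
    assert (Hs' : Rabs (s - x) <= Rabs (u - x)).
    { unfold Rmin, Rmax in Hs. destruct (Rle_dec x u); unfold Rabs; repeat destruct Rcase_abs; lra. }
    destruct (Hbox s v Hs' (Rle_refl _)) as [Hi _]. apply (Hex _ Hi). }
  destruct (MVT_abs (fun w => H (x,w)) (fun w => pd2 H (x,w)) y v) as [e [Hc2 Ec2]].
  { intros s Hs. apply (Derive_correct (fun s0 => H (x, s0))).
    assert (Hs' : Rabs (s - y) <= Rabs (v - y)).
    { unfold Rmin, Rmax in Hs. destruct (Rle_dec y v); unfold Rabs; repeat destruct Rcase_abs; lra. }
    assert (Hx0 : Rabs (x - x) <= Rabs (u - x)) by (rewrite Rminus_eq_0, Rabs_R0; apply Rabs_pos).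
    destruct (Hbox x s Hx0 Hs') as [Hi _]. apply (Hex _ Hi). }
  destruct (Hbox c v Hc (Rle_refl _)) as [Hi1 Hm1].
  assert (Hx0 : Rabs (x - x) <= Rabs (u - x)) by (rewrite Rminus_eq_0, Rabs_R0; apply Rabs_pos).
  destruct (Hbox x e Hx0 Hc2) as [Hi2 Hm2].
  specialize (P1 (c,v) Hi1 ltac:(pose proof (Rmin_l d1 d2); lra)).
  specialize (P2 (x,e) Hi2 ltac:(pose proof (Rmin_r d1 d2); lra)).
  replace (H (u,v) - H (x,y) - (pd1 H (x,y) * (u - x) + pd2 H (x,y) * (v - y)))
    with ((pd1 H (c,v) - pd1 H (x,y)) * (u - x) + (pd2 H (x,e) - pd2 H (x,y)) * (v - y))
    by (simpl in Ec, Ec2; lra).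
  eapply Rle_trans. apply Rabs_triang. rewrite !Rabs_mult.
  pose proof (Rmax_l (Rabs (u - x)) (Rabs (v - y))). pose proof (Rmax_r (Rabs (u - x)) (Rabs (v - y))).
  assert (Rabs (pd1 H (c, v) - pd1 H (x, y)) * Rabs (u - x) <= eps/2 * Rmax (Rabs (u - x)) (Rabs (v - y))).
  { apply Rmult_le_compat; try apply Rabs_pos; lra. }
  assert (Rabs (pd2 H (x, e) - pd2 H (x, y)) * Rabs (v - y) <= eps/2 * Rmax (Rabs (u - x)) (Rabs (v - y))).
  { apply Rmult_le_compat; try apply Rabs_pos; lra. }
  lra.
Qed.

Lemma polar_norm r t : (r * cos t)^2 + (r * sin t)^2 = r^2.
Proof. pose proof (sin2_cos2 t). unfold Rsqr in H. nra. Qed.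

Lemma Qd_polar a b r t : a^2 + b^2 < 1 -> -1 <= r <= 1 -> 0 < Qd a b (r * cos t) (r * sin t).
Proof. intros Hp Hr. apply Qd_pos. exact Hp. rewrite polar_norm. nra. Qed.

Lemma g_in_disk a b r t : a^2 + b^2 < 1 -> -1 < r < 1 -> in_disk (g1 a b r t, g2 a b r t).
Proof. intros Hp Hr. apply M_in_disk. exact Hp. rewrite polar_norm. nra. Qed.

Lemma g_in_cdisk a b r t : a^2 + b^2 < 1 -> -1 <= r <= 1 -> Cmod (g1 a b r t, g2 a b r t) <= 1.
Proof. intros Hp Hr. apply M_in_cdisk. exact Hp. rewrite polar_norm. nra. Qed.

Lemma C2_d0 psi z : C2_disk psi -> in_disk z ->
  differentiable_pt_lim (fun u v => psi (u,v)) (fst z) (snd z) (pd1 psi z) (pd2 psi z).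
Proof.
  intros HC Hz. destruct z as [x y]. apply C1_diff.
  - intros w Hw. destruct (HC w Hw) as [A [B _]]. split; assumption.
  - apply (HC _ Hz).
  - apply (HC _ Hz).
  - exact Hz.
Qed.

Lemma C2_d1 psi z : C2_disk psi -> in_disk z ->
  differentiable_pt_lim (fun u v => pd1 psi (u,v)) (fst z) (snd z) (pd1 (pd1 psi) z) (pd2 (pd1 psi) z).
Proof.
  intros HC Hz. destruct z as [x y]. apply C1_diff.
  - intros w Hw. destruct (HC w Hw) as [_ [_ [A [B _]]]]. split; assumption.
  - apply (HC _ Hz).
  - apply (HC _ Hz).
  - exact Hz.
Qed.

Lemma C2_d2 psi z : C2_disk psi -> in_disk z ->
  differentiable_pt_lim (fun u v => pd2 psi (u,v)) (fst z) (snd z) (pd1 (pd2 psi) z) (pd2 (pd2 psi) z).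
Proof.
  intros HC Hz. destruct z as [x y]. apply C1_diff.
  - intros w Hw. destruct (HC w Hw) as [_ [_ [_ [_ [A [B _]]]]]]. split; assumption.
  - apply (HC _ Hz).
  - apply (HC _ Hz).
  - exact Hz.
Qed.

Lemma chain (H : C -> R) (f1 f2 : R -> R) x l1 l2 d1 d2 :
  differentiable_pt_lim (fun u v => H (u,v)) (f1 x) (f2 x) l1 l2 ->
  is_derive f1 x d1 -> is_derive f2 x d2 ->
  is_derive (fun s => H (f1 s, f2 s)) x (l1 * d1 + l2 * d2).
Proof.
  intros HD D1 D2. apply is_derive_Reals.
  apply (derivable_pt_lim_comp_2d (fun u v => H (u,v)) f1 f2). exact HD.
  apply is_derive_Reals; exact D1. apply is_derive_Reals; exact D2.
Qed.

Lemma sum_prod f1 f2 h1 h2 x d1 d2 e1 e2 :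
  is_derive f1 x d1 -> is_derive h1 x e1 -> is_derive f2 x d2 -> is_derive h2 x e2 ->
  is_derive (fun t => f1 t * h1 t + f2 t * h2 t) x (d1 * h1 x + f1 x * e1 + (d2 * h2 x + f2 x * e2)).
Proof.
  intros A B C D. apply is_derive_Reals.
  apply derivable_pt_lim_plus; apply derivable_pt_lim_mult; apply is_derive_Reals; assumption.
Qed.

Definition Phi (psi : C -> R) a b r t := psi (g1 a b r t, g2 a b r t).
Definition Phir (psi : C -> R) a b r t :=
  pd1 psi (g1 a b r t, g2 a b r t) * g1r a b r t + pd2 psi (g1 a b r t, g2 a b r t) * g2r a b r t.
Definition Phit (psi : C -> R) a b r t :=
  pd1 psi (g1 a b r t, g2 a b r t) * g1t a b r t + pd2 psi (g1 a b r t, g2 a b r t) * g2t a b r t.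
Definition Phirr (psi : C -> R) a b r t :=
  (pd1 (pd1 psi) (g1 a b r t, g2 a b r t) * g1r a b r t + pd2 (pd1 psi) (g1 a b r t, g2 a b r t) * g2r a b r t) * g1r a b r t
  + pd1 psi (g1 a b r t, g2 a b r t) * g1rr a b r t
  + ((pd1 (pd2 psi) (g1 a b r t, g2 a b r t) * g1r a b r t + pd2 (pd2 psi) (g1 a b r t, g2 a b r t) * g2r a b r t) * g2r a b r t
  + pd2 psi (g1 a b r t, g2 a b r t) * g2rr a b r t).
Definition Phitt (psi : C -> R) a b r t :=
  (pd1 (pd1 psi) (g1 a b r t, g2 a b r t) * g1t a b r t + pd2 (pd1 psi) (g1 a b r t, g2 a b r t) * g2t a b r t) * g1t a b r t
  + pd1 psi (g1 a b r t, g2 a b r t) * g1tt a b r t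
  + ((pd1 (pd2 psi) (g1 a b r t, g2 a b r t) * g1t a b r t + pd2 (pd2 psi) (g1 a b r t, g2 a b r t) * g2t a b r t) * g2t a b r t
  + pd2 psi (g1 a b r t, g2 a b r t) * g2tt a b r t).


Lemma dPhi_r psi a b r t : C2_disk psi -> a^2+b^2 < 1 -> -1 < r < 1 ->
  is_derive (fun r => Phi psi a b r t) r (Phir psi a b r t).
Proof.
  intros HC Hp Hr. unfold Phi, Phir.
  assert (HQ := Qd_polar a b r t Hp ltac:(lra)).
  apply (chain psi (fun r => g1 a b r t) (fun r => g2 a b r t)).
  apply (C2_d0 psi (g1 a b r t, g2 a b r t) HC). apply g_in_disk; auto.
  apply d_g1_r; exact HQ. apply d_g2_r; exact HQ.
Qed.

Lemma dPhi_t psi a b r t : C2_disk psi -> a^2+b^2 < 1 -> -1 < r < 1 ->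
  is_derive (fun t => Phi psi a b r t) t (Phit psi a b r t).
Proof.
  intros HC Hp Hr. unfold Phi, Phit.
  assert (HQ := Qd_polar a b r t Hp ltac:(lra)).
  apply (chain psi (fun t => g1 a b r t) (fun t => g2 a b r t)).
  apply (C2_d0 psi (g1 a b r t, g2 a b r t) HC). apply g_in_disk; auto.
  apply d_g1_t; exact HQ. apply d_g2_t; exact HQ.
Qed.

Lemma dPhir_r psi a b r t : C2_disk psi -> a^2+b^2 < 1 -> -1 < r < 1 ->
  is_derive (fun r => Phir psi a b r t) r (Phirr psi a b r t).
Proof.
  intros HC Hp Hr. unfold Phir, Phirr.
  assert (HQ := Qd_polar a b r t Hp ltac:(lra)).
  assert (HD := g_in_disk a b r t Hp Hr).
  apply (sum_prod (fun r => pd1 psi (g1 a b r t, g2 a b r t)) (fun r => pd2 psi (g1 a b r t, g2 a b r t))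
     (fun r => g1r a b r t) (fun r => g2r a b r t)).
  - apply (chain (pd1 psi) (fun r => g1 a b r t) (fun r => g2 a b r t)).
    apply (C2_d1 psi (g1 a b r t, g2 a b r t) HC HD). apply d_g1_r; exact HQ. apply d_g2_r; exact HQ.
  - apply d_g1r_r; exact HQ.
  - apply (chain (pd2 psi) (fun r => g1 a b r t) (fun r => g2 a b r t)).
    apply (C2_d2 psi (g1 a b r t, g2 a b r t) HC HD). apply d_g1_r; exact HQ. apply d_g2_r; exact HQ.
  - apply d_g2r_r; exact HQ.
Qed.

Lemma dPhit_t psi a b r t : C2_disk psi -> a^2+b^2 < 1 -> -1 < r < 1 ->
  is_derive (fun t => Phit psi a b r t) t (Phitt psi a b r t).
Proof.
  intros HC Hp Hr. unfold Phit, Phitt.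
  assert (HQ := Qd_polar a b r t Hp ltac:(lra)).
  assert (HD := g_in_disk a b r t Hp Hr).
  apply (sum_prod (fun t => pd1 psi (g1 a b r t, g2 a b r t)) (fun t => pd2 psi (g1 a b r t, g2 a b r t))
     (fun t => g1t a b r t) (fun t => g2t a b r t)).
  - apply (chain (pd1 psi) (fun t => g1 a b r t) (fun t => g2 a b r t)).
    apply (C2_d1 psi (g1 a b r t, g2 a b r t) HC HD). apply d_g1_t; exact HQ. apply d_g2_t; exact HQ.
  - apply d_g1t_t; exact HQ.
  - apply (chain (pd2 psi) (fun t => g1 a b r t) (fun t => g2 a b r t)).
    apply (C2_d2 psi (g1 a b r t, g2 a b r t) HC HD). apply d_g1_t; exact HQ. apply d_g2_t; exact HQ.
  - apply d_g2t_t; exact HQ.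
Qed.

Lemma polar_laplace psi a b r t :
  pd1 (pd1 psi) (g1 a b r t, g2 a b r t) + pd2 (pd2 psi) (g1 a b r t, g2 a b r t) = 0 ->
  r^2 * Phirr psi a b r t + r * Phir psi a b r t + Phitt psi a b r t = 0.
Proof.
  intros Hh. unfold Phirr, Phir, Phitt.
  rewrite g1t_eq, g2t_eq, g1tt_eq, g2tt_eq.
  replace (pd2 (pd2 psi) (g1 a b r t, g2 a b r t)) with (- pd1 (pd1 psi) (g1 a b r t, g2 a b r t)) by lra.
  ring.
Qed.

Lemma c_comp (H : C -> R) a b r t : a^2+b^2 < 1 -> -1 < r < 1 ->
  (forall z, in_disk z -> cont_within in_disk H z) ->
  continuity_2d_pt (fun u v => H (g1 a b u v, g2 a b u v)) r t.
Proof.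
  intros Hp Hr HH. apply (jcont_to_2d _ r t (-1) 1 Hr).
  assert (HQ := Qd_polar a b r t Hp ltac:(lra)).
  apply comp_jcont with (A := in_disk).
  - apply HH. apply g_in_disk; auto.
  - apply c_g1; exact HQ.
  - apply c_g2; exact HQ.
  - intros u v Hu. apply g_in_disk; auto.
Qed.

Ltac c2dP :=
  lazymatch goal with
  | |- continuity_2d_pt (fun u v => @?f u v + @?g u v) _ _ => apply (continuity_2d_pt_plus f g); c2dP
  | |- continuity_2d_pt (fun u v => @?f u v * @?g u v) _ _ => apply (continuity_2d_pt_mult f g); c2dP
  | |- continuity_2d_pt (fun u v => ?H (g1 ?a ?b u v, g2 ?a ?b u v)) _ _ => apply c_comp; auto
  | |- continuity_2d_pt (fun u v => g1r ?a ?b u v) _ _ => apply c_g1r; apply Qd_polar; auto; lra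
  | |- continuity_2d_pt (fun u v => g2r ?a ?b u v) _ _ => apply c_g2r; apply Qd_polar; auto; lra
  | |- continuity_2d_pt (fun u v => g1rr ?a ?b u v) _ _ => apply c_g1rr; apply Qd_polar; auto; lra
  | |- continuity_2d_pt (fun u v => g2rr ?a ?b u v) _ _ => apply c_g2rr; apply Qd_polar; auto; lra
  | |- continuity_2d_pt (fun u v => g1t ?a ?b u v) _ _ => apply c_g1t; apply Qd_polar; auto; lra
  | |- continuity_2d_pt (fun u v => g2t ?a ?b u v) _ _ => apply c_g2t; apply Qd_polar; auto; lra
  | |- continuity_2d_pt (fun u v => g1tt ?a ?b u v) _ _ => apply c_g1tt; apply Qd_polar; auto; lra
  | |- continuity_2d_pt (fun u v => g2tt ?a ?b u v) _ _ => apply c_g2tt; apply Qd_polar; auto; lra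
  end.

Ltac c2hyp HC := intros z Hz; apply (HC z Hz).

Lemma c_Phi psi a b r t : C2_disk psi -> a^2+b^2 < 1 -> -1 < r < 1 -> continuity_2d_pt (Phi psi a b) r t.
Proof. intros HC Hp Hr. unfold Phi. apply (c_comp psi a b r t Hp Hr). c2hyp HC. Qed.

Lemma c_Phir psi a b r t : C2_disk psi -> a^2+b^2 < 1 -> -1 < r < 1 -> continuity_2d_pt (Phir psi a b) r t.
Proof. intros HC Hp Hr. unfold Phir. c2dP; c2hyp HC. Qed.

Lemma c_Phirr psi a b r t : C2_disk psi -> a^2+b^2 < 1 -> -1 < r < 1 -> continuity_2d_pt (Phirr psi a b) r t.
Proof. intros HC Hp Hr. unfold Phirr. c2dP; c2hyp HC. Qed.

Lemma c_Phitt psi a b r t : C2_disk psi -> a^2+b^2 < 1 -> -1 < r < 1 -> continuity_2d_pt (Phitt psi a b) r t.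
Proof. intros HC Hp Hr. unfold Phitt. c2dP; c2hyp HC. Qed.

Lemma jc_Phi1 psi a b t : (forall x, Cmod x <= 1 -> cont_within (fun y => Cmod y <= 1) psi x) -> a^2+b^2 < 1 ->
  jcont (fun u => -1 < u <= 1) (Phi psi a b) 1 t.
Proof.
  intros HC Hp. unfold Phi.
  assert (HQ := Qd_polar a b 1 t Hp ltac:(lra)).
  apply comp_jcont with (A := fun y => Cmod y <= 1).
  - apply HC. apply g_in_cdisk; auto; lra.
  - apply c_g1; exact HQ.
  - apply c_g2; exact HQ.
  - intros u v Hu. apply g_in_cdisk; auto; lra.
Qed.

Lemma ex_RInt_cpt (f : R -> R) : (forall t, 0 <= t <= 2*PI -> continuity_pt f t) -> ex_RInt f 0 (2*PI).
Proof.
  intros H. apply (ex_RInt_continuous (V := R_CompleteNormedModule)). intros z Hz. apply continuity_pt_filterlim. apply H.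
  pose proof PI_RGT_0. rewrite Rmin_left, Rmax_right in Hz; lra.
Qed.

Lemma param_deriv (f df : R -> R -> R) r0 : -1 < r0 < 1 ->
  (forall r t, -1 < r < 1 -> is_derive (fun u => f u t) r (df r t)) ->
  (forall r t, -1 < r < 1 -> continuity_2d_pt df r t) ->
  (forall r t, -1 < r < 1 -> continuity_2d_pt f r t) ->
  is_derive (fun r => RInt (f r) 0 (2*PI)) r0 (RInt (df r0) 0 (2*PI)).
Proof.
  intros Hr Hd Hc Hcf.
  assert (Hloc : forall P : R -> Prop, (forall r, -1 < r < 1 -> P r) -> locally r0 P).
  { intros P HP. apply locally_R. exists (Rmin (r0 + 1) (1 - r0)). split. apply Rmin_pos; lra.
    intros y Hy. apply HP. pose proof (Rmin_l (r0 + 1) (1 - r0)). pose proof (Rmin_r (r0 + 1) (1 - r0)).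
    apply Rabs_def2 in Hy. lra. }
  assert (E : RInt (df r0) 0 (2*PI) = RInt (fun t => Derive (fun u => f u t) r0) 0 (2*PI)).
  { apply RInt_ext. intros x _. symmetry. apply is_derive_unique. apply Hd. exact Hr. }
  rewrite E.
  apply (is_derive_RInt_param f 0 (2*PI) r0).
  - apply Hloc. intros r Hr' t _. eexists. apply Hd. exact Hr'.
  - intros t _. apply continuity_2d_pt_ext_loc with (f := df).
    + exists (mkposreal _ (Rmin_pos (r0 + 1) (1 - r0) ltac:(lra) ltac:(lra))). simpl. intros u v Hu _.
      pose proof (Rmin_l (r0 + 1) (1 - r0)). pose proof (Rmin_r (r0 + 1) (1 - r0)).
      apply Rabs_def2 in Hu. symmetry. apply is_derive_unique. apply Hd. lra.
    + apply Hc. exact Hr.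
  - apply Hloc. intros r Hr'. apply ex_RInt_cpt. intros t _. apply cont_pt_of_2d. apply Hcf. exact Hr'.
Qed.

Lemma param_cont (f : R -> R -> R) (S : R -> Prop) r0 : S r0 ->
  (forall t, 0 <= t <= 2*PI -> jcont S f r0 t) ->
  (forall r, S r -> ex_RInt (f r) 0 (2*PI)) ->
  forall eps, 0 < eps -> exists d, 0 < d /\ forall r, S r -> Rabs (r - r0) < d ->
    Rabs (RInt (f r) 0 (2*PI) - RInt (f r0) 0 (2*PI)) < eps.
Proof.
  intros HS Hj Hi eps Heps.
  pose proof PI_RGT_0 as HPI.
  set (e := eps / (2 * (2 * PI))).
  assert (He : 0 < e) by (unfold e; apply Rdiv_lt_0_compat; lra).
  assert (Hex : forall t, exists d : posreal, 0 <= t <= 2*PI ->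
     forall u v, S u -> Rabs (u - r0) < d -> Rabs (v - t) < d -> Rabs (f u v - f r0 t) < e / 2).
  { intros t. destruct (Rle_dec 0 t) as [H1|H1]; [destruct (Rle_dec t (2*PI)) as [H2|H2]|].
    - destruct (Hj t (conj H1 H2) (e/2) ltac:(lra)) as [d [Hd P]].
      exists (mkposreal d Hd). intros _. exact P.
    - exists (mkposreal 1 Rlt_0_1). intros Ht. lra.
    - exists (mkposreal 1 Rlt_0_1). intros Ht. lra. }
  set (dl := fun t => proj1_sig (constructive_indefinite_description _ (Hex t))).
  assert (Hdl : forall t, 0 <= t <= 2*PI ->
     forall u v, S u -> Rabs (u - r0) < dl t -> Rabs (v - t) < dl t -> Rabs (f u v - f r0 t) < e / 2).
  { intros t. unfold dl. destruct (constructive_indefinite_description _ (Hex t)) as [d P]. simpl. exact P. }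
  destruct (compactness_value_1d 0 (2*PI) dl) as [d Hd].
  exists d. split. apply cond_pos. intros r Hr Hrd.
  assert (Hpt : forall t, 0 <= t <= 2*PI -> Rabs (f r t - f r0 t) <= e).
  { intros t Ht. apply Rnot_lt_le. intros Hc. apply (Hd t Ht). intros [t0 [Ht0 [Ht1 Ht2]]].
    assert (A1 := Hdl t0 Ht0 r t Hr ltac:(lra) Ht1).
    assert (A2 := Hdl t0 Ht0 r0 t HS ltac:(rewrite Rminus_eq_0, Rabs_R0; apply cond_pos) Ht1).
    assert (Rabs (f r t - f r0 t) <= Rabs (f r t - f r0 t0) + Rabs (f r0 t - f r0 t0)).
    { replace (f r t - f r0 t) with ((f r t - f r0 t0) - (f r0 t - f r0 t0)) by ring.
      eapply Rle_trans. apply Rabs_triang. rewrite Rabs_Ropp. lra. }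
    lra. }
  assert (E : RInt (f r) 0 (2*PI) - RInt (f r0) 0 (2*PI) = RInt (fun t => f r t - f r0 t) 0 (2*PI)).
  { symmetry. apply (RInt_minus (V := R_CompleteNormedModule)); apply Hi; assumption. }
  rewrite E. eapply Rle_lt_trans.
  apply abs_RInt_le_const with (M := e). lra.
  apply (ex_RInt_minus (V := R_CompleteNormedModule)); apply Hi; assumption.
  exact Hpt.
  unfold e. replace ((2 * PI - 0) * (eps / (2 * (2 * PI)))) with (eps / 2) by (field; lra). lra.
Qed.

Lemma RInt_lin (f g : R -> R) al be A B : ex_RInt f A B -> ex_RInt g A B ->
  RInt (fun t => al * f t + be * g t) A B = al * RInt f A B + be * RInt g A B.
Proof.
  intros Hf Hg. apply is_RInt_unique.
  apply (is_RInt_plus (V := R_NormedModule) (fun t => al * f t) (fun t => be * g t)).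
  - apply (is_RInt_scal (V := R_NormedModule) f A B al). apply (RInt_correct (V := R_CompleteNormedModule)). exact Hf.
  - apply (is_RInt_scal (V := R_NormedModule) g A B be). apply (RInt_correct (V := R_CompleteNormedModule)). exact Hg.
Qed.

Lemma RInt_ext_R (f g : R -> R) A B : (forall t, f t = g t) -> RInt f A B = RInt g A B.
Proof. intros H. apply (RInt_ext (V := R_CompleteNormedModule)). intros; apply H. Qed.

Ltac rring := match goal with |- @eq _ ?x ?y => change (@eq R x y) end; ring.

Definition wfam (n : nat) (w w1 w2 : R -> R) :=
  (forall t, is_derive w t (w1 t)) /\ (forall t, is_derive w1 t (w2 t)) /\
  (forall t, w2 t = - (INR n)^2 * w t) /\ w (2*PI) = w 0 /\ w1 (2*PI) = w1 0.

Lemma der_cont (f : R -> R) (df : R) t : is_derive f t df -> continuity_pt f t.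
Proof. intros H. apply derivable_continuous_pt. exists df. apply is_derive_Reals. exact H. Qed.

Lemma wfam_cont n w w1 w2 : wfam n w w1 w2 ->
  (forall t, continuity_pt w t) /\ (forall t, continuity_pt w1 t) /\ (forall t, continuity_pt w2 t).
Proof.
  intros [D1 [D2 [E _]]]. split; [|split]; intros t.
  - apply (der_cont _ _ _ (D1 t)).
  - apply (der_cont _ _ _ (D2 t)).
  - apply continuity_pt_ext with (f := fun t => - (INR n)^2 * w t). intros; rewrite E; reflexivity.
    apply continuity_pt_mult. apply continuity_pt_const. intros u v; reflexivity. apply (der_cont _ _ _ (D1 t)).
Qed.

Lemma der_mult_const (f : R -> R) x l c : is_derive f x l -> is_derive (fun u => f u * c) x (l * c).
Proof.
  intros H. apply is_derive_Reals. replace (l * c) with (l * c + f x * 0) by ring.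
  apply (derivable_pt_lim_mult f (fun _ => c)). apply is_derive_Reals; exact H. apply derivable_pt_lim_const.
Qed.

Definition Iw psi a b (w : R -> R) r : R := RInt (fun t => Phi psi a b r t * w t) 0 (2*PI).
Definition I1w psi a b (w : R -> R) r : R := RInt (fun t => Phir psi a b r t * w t) 0 (2*PI).
Definition I2w psi a b (w : R -> R) r : R := RInt (fun t => Phirr psi a b r t * w t) 0 (2*PI).

Lemma c2w (F : R -> R -> R) (w : R -> R) r t : continuity_2d_pt F r t -> continuity_pt w t ->
  continuity_2d_pt (fun u v => F u v * w v) r t.
Proof. intros H1 H2. apply (continuity_2d_pt_mult F (fun _ v => w v)). exact H1. apply cont2_const1. exact H2. Qed.

Lemma I_deriv psi a b w r : C2_disk psi -> a^2+b^2 < 1 -> (forall t, continuity_pt w t) -> -1 < r < 1 ->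
  is_derive (Iw psi a b w) r (I1w psi a b w r).
Proof.
  intros HC Hp Hw Hr. unfold Iw, I1w.
  apply (param_deriv (fun r t => Phi psi a b r t * w t) (fun r t => Phir psi a b r t * w t) r Hr).
  - intros u t Hu. apply der_mult_const. apply dPhi_r; auto.
  - intros u t Hu. apply c2w. apply c_Phir; auto. apply Hw.
  - intros u t Hu. apply c2w. apply c_Phi; auto. apply Hw.
Qed.

Lemma I1_deriv psi a b w r : C2_disk psi -> a^2+b^2 < 1 -> (forall t, continuity_pt w t) -> -1 < r < 1 ->
  is_derive (I1w psi a b w) r (I2w psi a b w r).
Proof.
  intros HC Hp Hw Hr. unfold I1w, I2w.
  apply (param_deriv (fun r t => Phir psi a b r t * w t) (fun r t => Phirr psi a b r t * w t) r Hr).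
  - intros u t Hu. apply der_mult_const. apply dPhir_r; auto.
  - intros u t Hu. apply c2w. apply c_Phirr; auto. apply Hw.
  - intros u t Hu. apply c2w. apply c_Phir; auto. apply Hw.
Qed.

Lemma Phi_per psi a b r : Phi psi a b r (2*PI) = Phi psi a b r 0.
Proof. unfold Phi, g1, g2. rewrite cos_2PI, sin_2PI, cos_0, sin_0. reflexivity. Qed.
Lemma Phit_per psi a b r : Phit psi a b r (2*PI) = Phit psi a b r 0.
Proof. unfold Phit, g1, g2, g1t, g2t. rewrite cos_2PI, sin_2PI, cos_0, sin_0. reflexivity. Qed.

Lemma ODE psi a b n w w1 w2 r : C2_disk psi ->
  (forall x, in_disk x -> pd1 (pd1 psi) x + pd2 (pd2 psi) x = 0) ->
  a^2+b^2 < 1 -> wfam n w w1 w2 -> -1 < r < 1 ->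
  r^2 * I2w psi a b w r + r * I1w psi a b w r = (INR n)^2 * Iw psi a b w r.
Proof.
  intros HC Hh Hp Hwf Hr.
  destruct (wfam_cont _ _ _ _ Hwf) as [Cw [Cw1 Cw2]].
  destruct Hwf as [D1 [D2 [E [P1 P2]]]].
  assert (X : forall F : R -> R -> R, (forall t, continuity_2d_pt F r t) -> forall w, (forall t, continuity_pt w t) ->
     ex_RInt (fun t => F r t * w t) 0 (2*PI)).
  { intros F HF w' Hw'. apply ex_RInt_cpt. intros t _. apply cont_pt_of_2d with (f := fun u v => F u v * w' v).
    apply c2w. apply HF. apply Hw'. }
  assert (EPhi := X (Phi psi a b) (fun t => c_Phi psi a b r t HC Hp Hr) w Cw).
  assert (EPhir := X (Phir psi a b) (fun t => c_Phir psi a b r t HC Hp Hr) w Cw).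
  assert (EPhirr := X (Phirr psi a b) (fun t => c_Phirr psi a b r t HC Hp Hr) w Cw).
  assert (EPhitt := X (Phitt psi a b) (fun t => c_Phitt psi a b r t HC Hp Hr) w Cw).
  (* integration by parts *)
  set (H := fun t => Phit psi a b r t * w t - Phi psi a b r t * w1 t).
  assert (IBP : is_RInt (fun t => Phitt psi a b r t * w t - Phi psi a b r t * w2 t) 0 (2*PI) (minus (H (2*PI)) (H 0))).
  { apply (is_RInt_derive (V := R_CompleteNormedModule)).
    - intros t _. unfold H. apply is_derive_Reals.
      replace (Phitt psi a b r t * w t - Phi psi a b r t * w2 t) with
        ((Phitt psi a b r t * w t + Phit psi a b r t * w1 t) - (Phit psi a b r t * w1 t + Phi psi a b r t * w2 t)) by ring.
      apply derivable_pt_lim_minus; apply derivable_pt_lim_mult; apply is_derive_Reals; auto.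
      apply dPhit_t; auto. apply dPhi_t; auto.
    - intros t _. apply continuity_pt_filterlim.
      apply cont_pt_of_2d with (f := fun u v => Phitt psi a b u v * w v - Phi psi a b u v * w2 v).
      apply (continuity_2d_pt_minus (fun u v => Phitt psi a b u v * w v) (fun u v => Phi psi a b u v * w2 v)).
      apply c2w. apply c_Phitt; auto. apply Cw. apply c2w. apply c_Phi; auto. apply Cw2. }
  assert (H0 : minus (H (2*PI)) (H 0) = 0).
  { unfold H. rewrite Phi_per, Phit_per, P1, P2. unfold minus, plus, opp. simpl. ring. }
  rewrite H0 in IBP. apply (is_RInt_unique (V := R_CompleteNormedModule)) in IBP.
  assert (EPhiw2 : ex_RInt (fun t => Phi psi a b r t * w2 t) 0 (2*PI)).
  { apply X. intros t; apply c_Phi; auto. exact Cw2. }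
  assert (K1 : RInt (fun t => Phitt psi a b r t * w t) 0 (2*PI) = RInt (fun t => Phi psi a b r t * w2 t) 0 (2*PI)).
  { assert (L := RInt_lin _ _ 1 (-1) 0 (2*PI) EPhitt EPhiw2).
    assert (L2 : RInt (fun t => 1 * (Phitt psi a b r t * w t) + -1 * (Phi psi a b r t * w2 t)) 0 (2*PI)
        = RInt (fun t => Phitt psi a b r t * w t - Phi psi a b r t * w2 t) 0 (2*PI)).
    { apply RInt_ext_R. intros t. ring. }
    cbv beta in L. rewrite L2, IBP in L. lra. }
  assert (K2 : RInt (fun t => Phi psi a b r t * w2 t) 0 (2*PI) = - (INR n)^2 * Iw psi a b w r).
  { transitivity (RInt (fun t => (- (INR n)^2) * (Phi psi a b r t * w t) + 0 * (Phi psi a b r t * w t)) 0 (2*PI)).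
    - apply RInt_ext_R. intros t. rewrite E. ring.
    - rewrite (RInt_lin (fun t => Phi psi a b r t * w t) (fun t => Phi psi a b r t * w t)) by assumption.
      unfold Iw. rring. }
  assert (K3 : r^2 * I2w psi a b w r + r * I1w psi a b w r = - RInt (fun t => Phitt psi a b r t * w t) 0 (2*PI)).
  { unfold I2w, I1w.
    rewrite <- (RInt_lin (fun t => Phirr psi a b r t * w t) (fun t => Phir psi a b r t * w t)) by assumption.
    transitivity (RInt (fun t => (-1) * (Phitt psi a b r t * w t) + 0 * (Phitt psi a b r t * w t)) 0 (2*PI)).
    - apply RInt_ext_R. intros t.
      assert (L := polar_laplace psi a b r t (Hh _ (g_in_disk a b r t Hp Hr))). nra.
    - rewrite (RInt_lin (fun t => Phitt psi a b r t * w t) (fun t => Phitt psi a b r t * w t)) by assumption.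
      rring. }
  rewrite K3, K1, K2. rring.
Qed.

Lemma const_on (h : R -> R) lo hi : (forall r, lo < r < hi -> is_derive h r 0) ->
  forall x y, lo < x < hi -> lo < y < hi -> h x = h y.
Proof.
  intros Hd x y Hx Hy.
  destruct (MVT_abs h (fun _ => 0) x y) as [c [_ E]].
  - intros s Hs. apply Hd. unfold Rmin, Rmax in Hs. destruct (Rle_dec x y); lra.
  - lra.
Qed.

Lemma lim0 (h : R -> R) K : continuity_pt h 0 -> (forall r, 0 < r < 1 -> h r = K) -> h 0 = K.
Proof.
  intros Hc HK. destruct (Req_dec (h 0) K) as [E|NE]; [exact E|exfalso].
  assert (Heps : 0 < Rabs (h 0 - K)) by (apply Rabs_pos_lt; lra).
  destruct (Hc _ Heps) as [d [Hd P]].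
  set (r := Rmin (d/2) (1/2)).
  assert (Hr : 0 < r) by (apply Rmin_pos; lra).
  assert (r <= d/2) by apply Rmin_l. assert (r <= 1/2) by apply Rmin_r.
  specialize (P r). unfold D_x, no_cond, R_dist in P.
  assert (Hlt : Rabs (h r - h 0) < Rabs (h 0 - K)).
  { apply P. split. split; [exact I|lra]. simpl. unfold R_dist. rewrite Rminus_0_r, Rabs_right; lra. }
  rewrite HK in Hlt by lra. rewrite Rabs_minus_sym in Hlt. lra.
Qed.

Lemma lim1 (I : R -> R) (n : nat) C B :
  (forall r, 0 < r < 1 -> I r = C * r^n) ->
  (forall eps, 0 < eps -> exists d, 0 < d /\ forall r, 0 < r < 1 -> Rabs (r - 1) < d -> Rabs (I r - B) < eps) ->
  B = C.
Proof.
  intros HI HL.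
  assert (Hc : continuity_pt (fun r => C * r^n) 1).
  { apply derivable_continuous_pt. apply derivable_pt_mult. apply derivable_pt_const. apply derivable_pt_pow. }
  destruct (Req_dec B C) as [E|NE]; [exact E|exfalso].
  assert (Heps : 0 < Rabs (B - C) / 2) by (apply Rdiv_lt_0_compat; [apply Rabs_pos_lt; lra|lra]).
  destruct (HL _ Heps) as [d1 [Hd1 P1]].
  destruct (Hc _ Heps) as [d2 [Hd2 P2]].
  set (r := 1 - Rmin (d1/2) (Rmin (d2/2) (1/2))).
  assert (0 < Rmin (d1/2) (Rmin (d2/2) (1/2))) by (repeat apply Rmin_pos; lra).
  pose proof (Rmin_l (d1/2) (Rmin (d2/2) (1/2))). pose proof (Rmin_r (d1/2) (Rmin (d2/2) (1/2))).
  pose proof (Rmin_l (d2/2) (1/2)). pose proof (Rmin_r (d2/2) (1/2)).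
  assert (Hr : 0 < r < 1) by (unfold r; lra).
  assert (Hr1 : Rabs (r - 1) < d1) by (unfold r; rewrite Rabs_left; lra).
  specialize (P1 r Hr Hr1).
  assert (A2 : R_dist (C * r^n) (C * 1^n) < Rabs (B - C) / 2).
  { apply P2. split. split; [constructor|lra]. simpl. unfold R_dist. unfold r; rewrite Rabs_left; lra. }
  rewrite pow1, Rmult_1_r in A2. unfold R_dist in A2. rewrite HI in P1 by exact Hr.
  assert (Rabs (B - C) <= Rabs (C * r ^ n - B) + Rabs (C * r ^ n - C)).
  { replace (B - C) with (-(C * r^n - B) + (C * r^n - C)) by ring.
    eapply Rle_trans. apply Rabs_triang. rewrite Rabs_Ropp. lra. }
  lra.
Qed.

Lemma pow_pred_mul r n : r * (INR n * r^(pred n)) = INR n * r^n.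
Proof. destruct n; simpl. ring. ring. Qed.

Lemma ode_solve n (I I1 I2 : R -> R) :
  (forall r, -1 < r < 1 -> is_derive I r (I1 r)) ->
  (forall r, -1 < r < 1 -> is_derive I1 r (I2 r)) ->
  (forall r, -1 < r < 1 -> r^2 * I2 r + r * I1 r = (INR n)^2 * I r) ->
  exists C, forall r, 0 < r < 1 -> I r = C * r^n.
Proof.
  intros D1 D2 E.
  set (h := fun r => r^n * (r * I1 r - INR n * I r)).
  set (dh := fun r => INR n * r^(pred n) * (r * I1 r - INR n * I r) + r^n * (1 * I1 r + r * I2 r - (0 * I r + INR n * I1 r))).
  assert (Dh : forall r, -1 < r < 1 -> is_derive h r (dh r)).
  { intros r Hr. apply is_derive_Reals. unfold h, dh.
    apply (derivable_pt_lim_mult (fun r => r^n) (fun r => r * I1 r - INR n * I r)). apply derivable_pt_lim_pow.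
    apply (derivable_pt_lim_minus (fun r => r * I1 r) (fun r => INR n * I r)).
    apply (derivable_pt_lim_mult (fun r => r) I1). apply derivable_pt_lim_id.
    apply is_derive_Reals; auto.
    apply (derivable_pt_lim_mult (fun _ => INR n) I). apply derivable_pt_lim_const. apply is_derive_Reals; auto. }
  assert (Dh0 : forall r, 0 < r < 1 -> dh r = 0).
  { intros r Hr. apply Rmult_eq_reg_l with r; [|lra].
    unfold dh. rewrite Rmult_0_r.
    transitivity (r^n * (r^2 * I2 r + r * I1 r - (INR n)^2 * I r)).
    - replace (r * (INR n * r ^ Init.Nat.pred n * (r * I1 r - INR n * I r) + r ^ n * (1 * I1 r + r * I2 r - (0 * I r + INR n * I1 r))))
        with ((r * (INR n * r ^ Init.Nat.pred n)) * (r * I1 r - INR n * I r) + r ^ n * (r * I1 r + r^2 * I2 r - INR n * (r * I1 r))) by ring.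
      rewrite pow_pred_mul. ring.
    - rewrite E by lra. ring. }
  assert (Hh0 : h 0 = 0) by (unfold h; destruct n; simpl; ring).
  assert (Hhc : forall r, 0 < r < 1 -> h r = 0).
  { intros r Hr. rewrite <- Hh0. symmetry. apply lim0.
    - apply derivable_continuous_pt. exists (dh 0). apply is_derive_Reals. apply Dh. lra.
    - intros s Hs. apply (const_on h 0 1). intros u Hu. rewrite <- (Dh0 u Hu). apply Dh. lra. exact Hs. exact Hr. }
  assert (Hrel : forall r, 0 < r < 1 -> r * I1 r = INR n * I r).
  { intros r Hr. specialize (Hhc r Hr). unfold h in Hhc.
    assert (0 < r^n) by (apply pow_lt; lra).
    apply Rmult_integral in Hhc. destruct Hhc as [Z|Z]; lra. }
  set (k := fun r => I r / r^n).
  assert (Dk : forall r, 0 < r < 1 -> is_derive k r 0).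
  { intros r Hr. assert (0 < r^n) by (apply pow_lt; lra).
    apply is_derive_Reals. unfold k.
    replace 0 with ((I1 r * r^n - (INR n * r^(pred n)) * I r) / Rsqr (r^n)).
    apply (derivable_pt_lim_div I (fun r => r^n)). apply is_derive_Reals; apply D1; lra. apply derivable_pt_lim_pow. lra.
    assert (Z : I1 r * r ^ n - INR n * r ^ Init.Nat.pred n * I r = 0).
    { apply Rmult_eq_reg_l with r; [|lra].
      replace (r * (I1 r * r ^ n - INR n * r ^ Init.Nat.pred n * I r)) with
        ((r * I1 r) * r^n - I r * (r * (INR n * r ^ Init.Nat.pred n))) by ring.
      rewrite pow_pred_mul, Hrel by lra. ring. }
    rewrite Z. unfold Rdiv. ring. }
  exists (k (1/2)). intros r Hr.
  assert (k r = k (1/2)) by (apply (const_on k 0 1); auto; lra).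
  unfold k in H. assert (0 < r^n) by (apply pow_lt; lra).
  assert (Hk : I r = I r / r^n * r^n) by (field; lra). rewrite Hk, H. reflexivity.
Qed.

Lemma deriv_eq_open (f g : R -> R) l l' r : 0 < r < 1 -> (forall x, 0 < x < 1 -> f x = g x) ->
  is_derive f r l -> is_derive g r l' -> l = l'.
Proof.
  intros Hr He Df Dg.
  assert (Dg' : is_derive g r l).
  { apply (is_derive_ext_loc f g). apply locally_R. exists (Rmin r (1 - r)). split. apply Rmin_pos; lra.
    intros y Hy. apply He. pose proof (Rmin_l r (1-r)). pose proof (Rmin_r r (1-r)). apply Rabs_def2 in Hy. lra.
    exact Df. }
  apply is_derive_unique in Dg'. apply is_derive_unique in Dg. congruence.
Qed.

Definition Bw psi a b (w : R -> R) : R := RInt (fun t => Phi psi a b 1 t * w t) 0 (2*PI).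

Lemma jcont_cpt S f r t : S r -> jcont S f r t -> continuity_pt (f r) t.
Proof.
  intros Hs H eps Heps. destruct (H eps Heps) as [d [Hd P]]. exists d. split. exact Hd.
  intros x [_ Hx]. apply P. exact Hs. rewrite Rminus_eq_0, Rabs_R0. exact Hd. exact Hx.
Qed.

Lemma lim_at_1 psi a b w :
  C2_disk psi -> (forall x, Cmod x <= 1 -> cont_within (fun y => Cmod y <= 1) psi x) ->
  a^2+b^2 < 1 -> (forall t, continuity_pt w t) ->
  forall eps, 0 < eps -> exists d, 0 < d /\ forall r, 0 < r < 1 -> Rabs (r - 1) < d ->
    Rabs (Iw psi a b w r - Bw psi a b w) < eps.
Proof.
  intros HC Hcl Hp Hw eps Heps.
  assert (J : forall t, jcont (fun u => -1 < u <= 1) (fun u v => Phi psi a b u v * w v) 1 t).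
  { intros t. apply (jcont_mult _ (Phi psi a b) (fun _ v => w v)). apply jc_Phi1; auto.
    apply jcont_of_2d. apply cont2_const1. apply Hw. }
  destruct (param_cont (fun u v => Phi psi a b u v * w v) (fun u => -1 < u <= 1) 1 ltac:(lra)
     (fun t _ => J t)) with (eps := eps) as [d [Hd P]].
  - intros r Hr. apply ex_RInt_cpt. intros t _.
    destruct (Req_dec r 1) as [E|NE].
    + subst r. apply (jcont_cpt (fun u => -1 < u <= 1) (fun u v => Phi psi a b u v * w v) 1 t). lra. apply J.
    + apply cont_pt_of_2d with (f := fun u v => Phi psi a b u v * w v). apply c2w. apply c_Phi; auto; lra. apply Hw.
  - exact Heps.
  - exists d. split. exact Hd. intros r Hr Hrd. apply P. lra. exact Hrd.
Qed.

Lemma der_cpow B n r l : l = B * (INR n * r^(pred n)) -> is_derive (fun r => B * r^n) r l.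
Proof.
  intros E. subst l. apply is_derive_Reals. replace (B * (INR n * r ^ Init.Nat.pred n)) with (0 * r^n + B * (INR n * r^(pred n))) by ring.
  apply (derivable_pt_lim_mult (fun _ => B) (fun r => r^n)). apply derivable_pt_lim_const. apply derivable_pt_lim_pow.
Qed.

Lemma engine psi a b n w w1 w2 : C2_disk psi ->
  (forall x, in_disk x -> pd1 (pd1 psi) x + pd2 (pd2 psi) x = 0) ->
  (forall x, Cmod x <= 1 -> cont_within (fun y => Cmod y <= 1) psi x) ->
  a^2+b^2 < 1 -> wfam n w w1 w2 ->
  forall r, 0 < r < 1 -> Iw psi a b w r = Bw psi a b w * r^n.
Proof.
  intros HC Hh Hcl Hp Hwf.
  destruct (wfam_cont _ _ _ _ Hwf) as [Cw _].
  destruct (ode_solve n (Iw psi a b w) (I1w psi a b w) (I2w psi a b w)) as [C HI].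
  - intros r Hr. apply I_deriv; auto.
  - intros r Hr. apply I1_deriv; auto.
  - intros r Hr. apply (ODE psi a b n w w1 w2 r); auto.
  - assert (Bw psi a b w = C).
    { apply (lim1 (Iw psi a b w) n C). exact HI. intros eps Heps.
      destruct (lim_at_1 psi a b w HC Hcl Hp Cw eps Heps) as [d [Hd P]]. exists d. auto. }
    rewrite H. exact HI.
Qed.

Lemma main_n0 psi a b w w1 w2 : C2_disk psi ->
  (forall x, in_disk x -> pd1 (pd1 psi) x + pd2 (pd2 psi) x = 0) ->
  (forall x, Cmod x <= 1 -> cont_within (fun y => Cmod y <= 1) psi x) ->
  a^2+b^2 < 1 -> wfam 0 w w1 w2 -> Bw psi a b w = Iw psi a b w 0.
Proof.
  intros HC Hh Hcl Hp Hwf.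
  destruct (wfam_cont _ _ _ _ Hwf) as [Cw _].
  pose proof (engine psi a b 0 w w1 w2 HC Hh Hcl Hp Hwf) as HE. simpl in HE.
  symmetry. apply lim0.
  - apply derivable_continuous_pt. exists (I1w psi a b w 0). apply is_derive_Reals. apply I_deriv; auto. lra.
  - intros r Hr. rewrite HE by exact Hr. ring.
Qed.

Lemma main_n1 psi a b w w1 w2 : C2_disk psi ->
  (forall x, in_disk x -> pd1 (pd1 psi) x + pd2 (pd2 psi) x = 0) ->
  (forall x, Cmod x <= 1 -> cont_within (fun y => Cmod y <= 1) psi x) ->
  a^2+b^2 < 1 -> wfam 1 w w1 w2 -> Bw psi a b w = I1w psi a b w 0.
Proof.
  intros HC Hh Hcl Hp Hwf.
  destruct (wfam_cont _ _ _ _ Hwf) as [Cw _].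
  pose proof (engine psi a b 1 w w1 w2 HC Hh Hcl Hp Hwf) as HE.
  symmetry. apply lim0.
  - apply derivable_continuous_pt. exists (I2w psi a b w 0). apply is_derive_Reals. apply I1_deriv; auto. lra.
  - intros r Hr. apply (deriv_eq_open (Iw psi a b w) (fun r => Bw psi a b w * r^1) _ _ r Hr).
    + intros x Hx. apply HE. exact Hx.
    + apply I_deriv; auto. lra.
    + apply der_cpow. simpl; rring.
Qed.

Lemma main_n2 psi a b w w1 w2 : C2_disk psi ->
  (forall x, in_disk x -> pd1 (pd1 psi) x + pd2 (pd2 psi) x = 0) ->
  (forall x, Cmod x <= 1 -> cont_within (fun y => Cmod y <= 1) psi x) ->
  a^2+b^2 < 1 -> wfam 2 w w1 w2 -> 2 * Bw psi a b w = I2w psi a b w 0.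
Proof.
  intros HC Hh Hcl Hp Hwf.
  destruct (wfam_cont _ _ _ _ Hwf) as [Cw _].
  pose proof (engine psi a b 2 w w1 w2 HC Hh Hcl Hp Hwf) as HE.
  set (B := Bw psi a b w) in *.
  assert (H1 : forall r, 0 < r < 1 -> I1w psi a b w r = 2 * B * r).
  { intros r Hr. apply (deriv_eq_open (Iw psi a b w) (fun r => B * r^2) _ _ r Hr).
    + intros x Hx. apply HE. exact Hx.
    + apply I_deriv; auto. lra.
    + apply der_cpow. simpl; rring. }
  assert (H2 : forall r, 0 < r < 1 -> I2w psi a b w r = 2 * B).
  { intros r Hr. apply (deriv_eq_open (I1w psi a b w) (fun r => 2 * B * r) _ _ r Hr).
    + exact H1.
    + apply I1_deriv; auto. lra.
    + apply (is_derive_ext (fun r => (2 * B) * r^1)). intros; rring. apply der_cpow. simpl; rring. }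
  destruct (Req_dec (2 * B) (I2w psi a b w 0)) as [E|NE]; [exact E|exfalso].
  assert (Heps : 0 < Rabs (2 * B - I2w psi a b w 0)) by (apply Rabs_pos_lt; lra).
  destruct (param_cont (fun u v => Phirr psi a b u v * w v) (fun u => -1 < u < 1) 0 ltac:(lra))
     with (eps := Rabs (2 * B - I2w psi a b w 0)) as [d [Hd P]].
  - intros t _. apply jcont_of_2d. apply c2w. apply c_Phirr; auto; lra. apply Cw.
  - intros r Hr. apply ex_RInt_cpt. intros t _. apply cont_pt_of_2d with (f := fun u v => Phirr psi a b u v * w v).
    apply c2w. apply c_Phirr; auto. apply Cw.
  - exact Heps.
  - set (r := Rmin (d/2) (1/2)).
    assert (0 < r) by (apply Rmin_pos; lra). assert (r <= d/2) by apply Rmin_l. assert (r <= 1/2) by apply Rmin_r.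
    specialize (P r ltac:(lra) ltac:(rewrite Rminus_0_r, Rabs_right; lra)).
    fold (I2w psi a b w r) in P. fold (I2w psi a b w 0) in P. rewrite H2 in P by lra. lra.
Qed.

Lemma RInt_antider (f G : R -> R) : (forall t, is_derive G t (f t)) -> (forall t, continuity_pt f t) ->
  @eq R (RInt f 0 (2*PI)) (G (2*PI) - G 0).
Proof.
  intros D C. apply (is_RInt_unique (V := R_CompleteNormedModule)).
  apply (is_RInt_derive (V := R_CompleteNormedModule) G f). intros; apply D. intros; apply continuity_pt_filterlim; apply C.
Qed.

Lemma trig4 : cos (2 * (2 * PI)) = 1 /\ sin (2 * (2 * PI)) = 0.
Proof. rewrite (cos_2a (2*PI)), (sin_2a (2*PI)), cos_2PI, sin_2PI. split; ring. Qed.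
Lemma trig0 : cos (2 * 0) = 1 /\ sin (2 * 0) = 0.
Proof. rewrite Rmult_0_r, cos_0, sin_0. split; reflexivity. Qed.

Lemma sc1 t : sin t ^ 2 + cos t ^ 2 = 1.
Proof. pose proof (sin2_cos2 t). unfold Rsqr in H. simpl. lra. Qed.


Lemma int_a c : @eq R (RInt (fun t => c * 1) 0 (2*PI)) (2 * PI * c).
Proof.
  rewrite (RInt_antider _ (fun t => c * t)). ring.
  intros t. auto_derive. auto. ring. intros t. apply continuity_pt_const. intros u v; reflexivity.
Qed.

Ltac contpt := intros ?; apply derivable_continuous_pt; apply ex_derive_Reals_0; auto_derive; auto.

Ltac toR := match goal with |- @eq _ ?x ?y => change (@eq R x y) end.

Lemma int_b k X Y : @eq R (RInt (fun t => (X * (k * cos t) + Y * (k * sin t)) * cos t) 0 (2*PI)) (PI * k * X).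
Proof.
  rewrite (RInt_antider _ (fun t => k * (X * (t + sin t * cos t) / 2 + Y * (sin t)^2 / 2))).
  - rewrite cos_2PI, sin_2PI, cos_0, sin_0. field.
  - intros t. auto_derive. auto. toR. pose proof (sc1 t).
    assert (k*X*(sin t^2+cos t^2) = k*X) by (rewrite H; ring). lra.
  - contpt.
Qed.

Lemma int_c k X Y : @eq R (RInt (fun t => (X * (k * cos t) + Y * (k * sin t)) * sin t) 0 (2*PI)) (PI * k * Y).
Proof.
  rewrite (RInt_antider _ (fun t => k * (X * (sin t)^2 / 2 + Y * (t - sin t * cos t) / 2))).
  - rewrite cos_2PI, sin_2PI, cos_0, sin_0. field.
  - intros t. auto_derive. auto. toR. pose proof (sc1 t).
    assert (k*Y*(sin t^2+cos t^2) = k*Y) by (rewrite H; ring). lra.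
  - contpt.
Qed.

Lemma int_d k A B C E : @eq R (RInt (fun t => ((A * (k * cos t) + B * (k * sin t)) * (k * cos t) + (C * (k * cos t) + E * (k * sin t)) * (k * sin t)) * cos (2 * t)) 0 (2*PI))
   (k^2 * PI * (A - E) / 2).
Proof.
  rewrite (RInt_ext_R _ (fun t => k^2 * ((A+E)/2 * cos (2*t) + (A-E)/2 * cos (2*t)^2 + (B+C)/2 * (sin (2*t) * cos (2*t))))).
  2: { intros t. rewrite cos_2a, sin_2a. pose proof (sc1 t).
       assert (k^2*(A+E)*(cos t * cos t - sin t * sin t)*(sin t^2+cos t^2) = k^2*(A+E)*(cos t * cos t - sin t * sin t)) by (rewrite H; ring).
       lra. }
  rewrite (RInt_antider _ (fun t => k^2 * ((A+E)/4 * sin (2*t) + (A-E)/2 * (t/2 + sin (2*t) * cos (2*t) / 4) + (B+C)/8 * sin (2*t)^2))).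
  - destruct trig4 as [T1 T2]. destruct trig0 as [T3 T4]. rewrite T1, T2, T3, T4. field.
  - intros t. auto_derive. auto. toR. pose proof (sc1 (2*t)).
    assert (k^2*(A-E)*(sin (2*t)^2+cos (2*t)^2) = k^2*(A-E)) by (rewrite H; ring). lra.
  - contpt.
Qed.

Lemma int_e k A B C E : @eq R (RInt (fun t => ((A * (k * cos t) + B * (k * sin t)) * (k * cos t) + (C * (k * cos t) + E * (k * sin t)) * (k * sin t)) * sin (2 * t)) 0 (2*PI))
   (k^2 * PI * (B + C) / 2).
Proof.
  rewrite (RInt_ext_R _ (fun t => k^2 * ((A+E)/2 * sin (2*t) + (A-E)/2 * (cos (2*t) * sin (2*t)) + (B+C)/2 * sin (2*t)^2))).
  2: { intros t. rewrite cos_2a, sin_2a. pose proof (sc1 t).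
       assert (k^2*(A+E)*(sin t * cos t)*(sin t^2+cos t^2) = k^2*(A+E)*(sin t * cos t)) by (rewrite H; ring).
       lra. }
  rewrite (RInt_antider _ (fun t => k^2 * (- (A+E)/4 * cos (2*t) + (A-E)/8 * sin (2*t)^2 + (B+C)/2 * (t/2 - sin (2*t) * cos (2*t) / 4)))).
  - destruct trig4 as [T1 T2]. destruct trig0 as [T3 T4]. rewrite T1, T2, T3, T4. field.
  - intros t. auto_derive. auto. toR. pose proof (sc1 (2*t)).
    assert (k^2*(B+C)*(sin (2*t)^2+cos (2*t)^2) = k^2*(B+C)) by (rewrite H; ring). lra.
  - contpt.
Qed.

Lemma cw2d (H : C -> R) x y : cont_within in_disk H (x,y) -> in_disk (x,y) ->
  continuity_2d_pt (fun u v => H (u,v)) x y.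
Proof.
  intros HH Hin eps. destruct (HH eps (cond_pos eps)) as [d [Hd P]].
  unfold in_disk in Hin.
  assert (Hd' : 0 < Rmin (d/2) ((1 - Cmod (x,y))/2)) by (apply Rmin_pos; lra).
  exists (mkposreal _ Hd'). simpl. intros u v Hu Hv.
  pose proof (Rmin_l (d/2) ((1 - Cmod (x,y))/2)). pose proof (Rmin_r (d/2) ((1 - Cmod (x,y))/2)).
  apply P.
  - unfold in_disk. pose proof (Cmod_shift u v x y). lra.
  - rewrite Cminus_pair. eapply Rle_lt_trans. apply Cmod_le_sum. lra.
Qed.

Lemma schwarz_psi psi x y : C2_disk psi -> in_disk (x,y) -> pd2 (pd1 psi) (x,y) = pd1 (pd2 psi) (x,y).
Proof.
  intros HC Hin. symmetry.
  assert (Hin' := Hin). unfold in_disk in Hin'.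
  apply (Schwarz (fun u v => psi (u,v)) x y).
  - assert (Hd : 0 < (1 - Cmod (x,y))/2) by lra.
    exists (mkposreal _ Hd). simpl. intros u v Hu Hv.
    assert (Hz : in_disk (u,v)) by (unfold in_disk; pose proof (Cmod_shift u v x y); lra).
    destruct (HC _ Hz) as [E1 [E2 [E3 [E4 [E5 [E6 _]]]]]].
    split; [exact E1|split; [exact E2|split; [exact E5|exact E4]]].
  - apply (cw2d (pd1 (pd2 psi))). apply (HC _ Hin). exact Hin.
  - apply (cw2d (pd2 (pd1 psi))). apply (HC _ Hin). exact Hin.
Qed.

Lemma g1_0 a b t : g1 a b 0 t = a.
Proof. unfold g1. rewrite !Rmult_0_l. apply M1_0. Qed.
Lemma g2_0 a b t : g2 a b 0 t = b.
Proof. unfold g2. rewrite !Rmult_0_l. apply M2_0. Qed.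
Lemma g1r_0 a b t : g1r a b 0 t = kk a b * cos t.
Proof. unfold g1r. rewrite !Rmult_0_l, M1x_0, M1y_0. ring. Qed.
Lemma g2r_0 a b t : g2r a b 0 t = kk a b * sin t.
Proof. unfold g2r. rewrite !Rmult_0_l, M1x_0, M1y_0. ring. Qed.

Lemma eval_I0 psi a b : Iw psi a b (fun _ => 1) 0 = 2 * PI * psi (a,b).
Proof.
  unfold Iw. rewrite (RInt_ext_R _ (fun t => psi (a,b) * 1)). apply int_a.
  intros t. unfold Phi. rewrite g1_0, g2_0. reflexivity.
Qed.

Lemma eval_I1c psi a b : I1w psi a b cos 0 = PI * kk a b * pd1 psi (a,b).
Proof.
  unfold I1w. rewrite (RInt_ext_R _ (fun t => (pd1 psi (a,b) * (kk a b * cos t) + pd2 psi (a,b) * (kk a b * sin t)) * cos t)).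
  apply int_b. intros t. unfold Phir. rewrite g1_0, g2_0, g1r_0, g2r_0. reflexivity.
Qed.

Lemma eval_I1s psi a b : I1w psi a b sin 0 = PI * kk a b * pd2 psi (a,b).
Proof.
  unfold I1w. rewrite (RInt_ext_R _ (fun t => (pd1 psi (a,b) * (kk a b * cos t) + pd2 psi (a,b) * (kk a b * sin t)) * sin t)).
  apply int_c. intros t. unfold Phir. rewrite g1_0, g2_0, g1r_0, g2r_0. reflexivity.
Qed.

Lemma Phirr_0 psi a b t : pd1 psi (a,b) = 0 -> pd2 psi (a,b) = 0 ->
  Phirr psi a b 0 t = (pd1 (pd1 psi) (a,b) * (kk a b * cos t) + pd2 (pd1 psi) (a,b) * (kk a b * sin t)) * (kk a b * cos t)
    + (pd1 (pd2 psi) (a,b) * (kk a b * cos t) + pd2 (pd2 psi) (a,b) * (kk a b * sin t)) * (kk a b * sin t).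
Proof. intros H1 H2. unfold Phirr. rewrite g1_0, g2_0, g1r_0, g2r_0, H1, H2. ring. Qed.

Lemma eval_I2c psi a b : pd1 psi (a,b) = 0 -> pd2 psi (a,b) = 0 ->
  I2w psi a b (fun t => cos (2*t)) 0 = kk a b ^2 * PI * (pd1 (pd1 psi) (a,b) - pd2 (pd2 psi) (a,b)) / 2.
Proof.
  intros H1 H2. unfold I2w. rewrite <- (int_d (kk a b) (pd1 (pd1 psi) (a,b)) (pd2 (pd1 psi) (a,b)) (pd1 (pd2 psi) (a,b)) (pd2 (pd2 psi) (a,b))). apply RInt_ext_R. intros t. rewrite Phirr_0 by assumption. reflexivity.
Qed.

Lemma eval_I2s psi a b : pd1 psi (a,b) = 0 -> pd2 psi (a,b) = 0 ->
  I2w psi a b (fun t => sin (2*t)) 0 = kk a b ^2 * PI * (pd2 (pd1 psi) (a,b) + pd1 (pd2 psi) (a,b)) / 2.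
Proof.
  intros H1 H2. unfold I2w. rewrite <- (int_e (kk a b) (pd1 (pd1 psi) (a,b)) (pd2 (pd1 psi) (a,b)) (pd1 (pd2 psi) (a,b)) (pd2 (pd2 psi) (a,b))). apply RInt_ext_R. intros t. rewrite Phirr_0 by assumption. reflexivity.
Qed.

Lemma wf_1 : wfam 0 (fun _ => 1) (fun _ => 0) (fun _ => 0).
Proof.
  split; [|split; [|split; [|split]]].
  - intros ?. apply (is_derive_const (K := R_AbsRing) (V := R_NormedModule)).
  - intros ?. apply (is_derive_const (K := R_AbsRing) (V := R_NormedModule)).
  - intros ?. simpl. ring.
  - reflexivity.
  - reflexivity.
Qed.

Lemma wf_cos : wfam 1 cos (fun t => - sin t) (fun t => - cos t).
Proof.
  split; [|split; [|split; [|split]]].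
  - intros t. auto_derive. auto. ring.
  - intros t. auto_derive. auto. ring.
  - intros t. simpl. ring.
  - rewrite cos_2PI, cos_0. reflexivity.
  - rewrite sin_2PI, sin_0. reflexivity.
Qed.

Lemma wf_sin : wfam 1 sin cos (fun t => - sin t).
Proof.
  split; [|split; [|split; [|split]]].
  - intros t. auto_derive. auto. ring.
  - intros t. auto_derive. auto. ring.
  - intros t. simpl. ring.
  - rewrite sin_2PI, sin_0. reflexivity.
  - rewrite cos_2PI, cos_0. reflexivity.
Qed.

Lemma wf_cos2 : wfam 2 (fun t => cos (2*t)) (fun t => -2 * sin (2*t)) (fun t => -4 * cos (2*t)).
Proof.
  destruct trig4 as [T1 T2]. destruct trig0 as [T3 T4].
  split; [|split; [|split; [|split]]].
  - intros t. auto_derive. auto. ring.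
  - intros t. auto_derive. auto. ring.
  - intros t. simpl. ring.
  - rewrite T1, T3. reflexivity.
  - rewrite T2, T4. reflexivity.
Qed.

Lemma wf_sin2 : wfam 2 (fun t => sin (2*t)) (fun t => 2 * cos (2*t)) (fun t => -4 * sin (2*t)).
Proof.
  destruct trig4 as [T1 T2]. destruct trig0 as [T3 T4].
  split; [|split; [|split; [|split]]].
  - intros t. auto_derive. auto. ring.
  - intros t. auto_derive. auto. ring.
  - intros t. simpl. ring.
  - rewrite T2, T4. reflexivity.
  - rewrite T1, T3. reflexivity.
Qed.

Lemma exB psi a b w : (forall x, Cmod x <= 1 -> cont_within (fun y => Cmod y <= 1) psi x) ->
  a^2+b^2 < 1 -> (forall t, continuity_pt w t) ->
  ex_RInt (fun t => Phi psi a b 1 t * w t) 0 (2*PI).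
Proof.
  intros Hcl Hp Hw. apply ex_RInt_cpt. intros t _.
  apply (jcont_cpt (fun u => -1 < u <= 1) (fun u v => Phi psi a b u v * w v) 1 t). lra.
  apply (jcont_mult _ (Phi psi a b) (fun _ v => w v)). apply jc_Phi1; auto.
  apply jcont_of_2d. apply cont2_const1. apply Hw.
Qed.

Theorem proposition4p3 (phi : nat -> C -> R) (psi : C -> R) (p : C) :
  admissible phi ->
  dirichlet_solution (Phi_a phi) psi ->
  in_disk p ->
  ( (bint (fun z => Phi_a phi (moeb p z)) = 0 /\
     bint (fun z => Phi_a phi (moeb p z) * fst z) = 0 /\
     bint (fun z => Phi_a phi (moeb p z) * snd z) = 0 /\
     bint (fun z => Phi_a phi (moeb p z) * (fst z) ^ 2) = 0 /\
     bint (fun z => Phi_a phi (moeb p z) * (fst z * snd z)) = 0)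
  <->
    (psi p = 0 /\
     (pd1 psi p = 0 /\ pd2 psi p = 0) /\
     (pd1 (pd1 psi) p = 0 /\ pd2 (pd1 psi) p = 0 /\
      pd1 (pd2 psi) p = 0 /\ pd2 (pd2 psi) p = 0)) ).
Proof.
  intros _ [HC [Hh [Hcl Hbd]]] Hin.
  destruct p as [a b].
  assert (Hp : a^2 + b^2 < 1).
  { unfold in_disk in Hin. rewrite Cmod_pair in Hin.
    destruct (Rlt_or_le (a^2+b^2) 1) as [L|L]; [exact L|].
    exfalso. apply sqrt_le_1_alt in L. rewrite sqrt_1 in L. lra. }
  assert (Hk : 0 < kk a b) by (apply kk_pos; exact Hp).
  pose proof PI_RGT_0 as HPI.
  assert (Hbd' : forall t, Phi_a phi (moeb (a,b) (circ t)) = Phi psi a b 1 t).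
  { intros t. unfold circ, Phi, g1, g2. rewrite !Rmult_1_l.
    assert (HQ : 0 < Qd a b (cos t) (sin t)).
    { apply Qd_pos. exact Hp. pose proof (sc1 t). lra. }
    rewrite (moeb_eq a b _ _ HQ). symmetry. apply Hbd. apply M_on_circle. exact Hp. pose proof (sc1 t). lra. }
  assert (Cc : forall t, continuity_pt cos t) by (intros; apply continuity_cos).
  assert (Cs : forall t, continuity_pt sin t) by (intros; apply continuity_sin).
  assert (C1 : forall t : R, continuity_pt (fun _ => 1) t) by (intros; apply continuity_pt_const; intros ? ?; reflexivity).
  assert (Cc2 : forall t, continuity_pt (fun t => cos (2*t)) t).
  { intros t. apply derivable_continuous_pt. apply ex_derive_Reals_0. auto_derive. auto. }
  assert (Cs2 : forall t, continuity_pt (fun t => sin (2*t)) t).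
  { intros t. apply derivable_continuous_pt. apply ex_derive_Reals_0. auto_derive. auto. }
  assert (J0 : bint (fun z => Phi_a phi (moeb (a,b) z)) = 2 * PI * psi (a,b)).
  { unfold bint. rewrite (RInt_ext_R _ (fun t => Phi psi a b 1 t * 1)).
    2: { intros t. rewrite Hbd'. ring. }
    fold (Bw psi a b (fun _ => 1)). rewrite (main_n0 psi a b _ _ _ HC Hh Hcl Hp wf_1). apply eval_I0. }
  assert (J1 : bint (fun z => Phi_a phi (moeb (a,b) z) * fst z) = PI * kk a b * pd1 psi (a,b)).
  { unfold bint. rewrite (RInt_ext_R _ (fun t => Phi psi a b 1 t * cos t)).
    2: { intros t. rewrite Hbd'. reflexivity. }
    fold (Bw psi a b cos). rewrite (main_n1 psi a b _ _ _ HC Hh Hcl Hp wf_cos). apply eval_I1c. }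
  assert (J2 : bint (fun z => Phi_a phi (moeb (a,b) z) * snd z) = PI * kk a b * pd2 psi (a,b)).
  { unfold bint. rewrite (RInt_ext_R _ (fun t => Phi psi a b 1 t * sin t)).
    2: { intros t. rewrite Hbd'. reflexivity. }
    fold (Bw psi a b sin). rewrite (main_n1 psi a b _ _ _ HC Hh Hcl Hp wf_sin). apply eval_I1s. }
  assert (B2c := main_n2 psi a b _ _ _ HC Hh Hcl Hp wf_cos2).
  assert (B2s := main_n2 psi a b _ _ _ HC Hh Hcl Hp wf_sin2).
  assert (J3 : bint (fun z => Phi_a phi (moeb (a,b) z) * (fst z)^2) =
     / 2 * (2 * PI * psi (a,b)) + / 2 * Bw psi a b (fun t => cos (2*t))).
  { unfold bint. rewrite (RInt_ext_R _ (fun t => /2 * (Phi psi a b 1 t * 1) + /2 * (Phi psi a b 1 t * cos (2*t)))).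
    2: { intros t. rewrite Hbd'. simpl. rewrite cos_2a_cos. field. }
    rewrite (RInt_lin (fun t => Phi psi a b 1 t * 1) (fun t => Phi psi a b 1 t * cos (2*t))).
    2: apply exB; auto. 2: apply exB; auto.
    fold (Bw psi a b (fun _ => 1)). fold (Bw psi a b (fun t => cos (2*t))).
    rewrite (main_n0 psi a b _ _ _ HC Hh Hcl Hp wf_1), eval_I0. reflexivity. }
  assert (J4 : bint (fun z => Phi_a phi (moeb (a,b) z) * (fst z * snd z)) = / 2 * Bw psi a b (fun t => sin (2*t))).
  { unfold bint. rewrite (RInt_ext_R _ (fun t => /2 * (Phi psi a b 1 t * sin (2*t)) + 0 * (Phi psi a b 1 t * sin (2*t)))).
    2: { intros t. rewrite Hbd'. simpl. rewrite sin_2a. field. }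
    rewrite (RInt_lin (fun t => Phi psi a b 1 t * sin (2*t)) (fun t => Phi psi a b 1 t * sin (2*t))).
    2: apply exB; auto. 2: apply exB; auto.
    fold (Bw psi a b (fun t => sin (2*t))). ring. }
  assert (Hsch := schwarz_psi psi a b HC Hin).
  assert (Hhp := Hh (a,b) Hin).
  rewrite J0, J1, J2, J3, J4.
  split.
  - intros [E0 [E1 [E2 [E3 E4]]]].
    assert (P0 : psi (a,b) = 0) by nra.
    assert (P1 : pd1 psi (a,b) = 0).
    { assert (0 < PI * kk a b) by nra. apply Rmult_integral in E1. destruct E1; [lra|exact H0]. }
    assert (P2 : pd2 psi (a,b) = 0).
    { assert (0 < PI * kk a b) by nra. apply Rmult_integral in E2. destruct E2; [lra|exact H0]. }
    rewrite (eval_I2c psi a b P1 P2) in B2c. rewrite (eval_I2s psi a b P1 P2) in B2s.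
    assert (K2 : 0 < kk a b ^2 * PI) by (apply Rmult_lt_0_compat; [apply pow_lt|]; lra).
    assert (Q1 : pd1 (pd1 psi) (a,b) - pd2 (pd2 psi) (a,b) = 0).
    { assert (Bw psi a b (fun t => cos (2*t)) = 0) by lra.
      assert (kk a b ^ 2 * PI * (pd1 (pd1 psi) (a, b) - pd2 (pd2 psi) (a, b)) = 0) by lra.
      apply Rmult_integral in H0. destruct H0; [lra|exact H0]. }
    assert (Q2 : pd2 (pd1 psi) (a,b) + pd1 (pd2 psi) (a,b) = 0).
    { assert (Bw psi a b (fun t => sin (2*t)) = 0) by lra.
      assert (kk a b ^ 2 * PI * (pd2 (pd1 psi) (a, b) + pd1 (pd2 psi) (a, b)) = 0) by lra.
      apply Rmult_integral in H0. destruct H0; [lra|exact H0]. }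
    repeat split; lra.
  - intros [P0 [[P1 P2] [Q1 [Q2 [Q3 Q4]]]]].
    rewrite (eval_I2c psi a b P1 P2) in B2c. rewrite (eval_I2s psi a b P1 P2) in B2s.
    rewrite P0, P1, P2. rewrite Q1, Q4 in B2c. rewrite Q2, Q3 in B2s.
    repeat split; lra.
Qed.
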